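(* Let $N\ge2$ and $r\ge1$ be integers, let $\mathbf z=(z_1,\dots,z_r)\in\mathbb C^r$ with $|z_i|\le1$ for all $i$ and $z_1\ne0$, and let $(s_1,\dots,s_r)\in U_r$. Then for $r=1$, $$\Big(1-\frac1{z_1}\Big)\mathrm{Li}^\star_{(z_1)}(s_1-1)_{\ge N}+\frac{z_1^{N-1}}{N^{s_1-1}}=\sum_{k\ge0}(-1)^k\frac{(s_1-1)_{k+1}}{(k+1)!}\mathrm{Li}^\star_{(z_1)}(s_1+k)_{\ge N},$$ and for $r>1$, $$\Big(1-\frac1{z_1}\Big)\mathrm{Li}^\star_{\mathbf z}(s_1-1,s_2,\dots,s_r)_{\ge N}+\frac1{z_1}\mathrm{Li}^\star_{(z_1z_2,z_3,\dots,z_r)}(s_1+s_2-1,s_3,\dots,s_r)_{\ge N}=\sum_{k\ge0}(-1)^k\frac{(s_1-1)_{k+1}}{(k+1)!}\mathrm{Li}^\star_{\mathbf z}(s_1+k,s_2,\dots,s_r)_{\ge N}.$$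
   Context: $U_r:=\{(s_1,\dots,s_r)\in\mathbb C^r:\Re(s_1+\cdots+s_i)>i\text{ for all }1\le i\le r\}$. For $|w_i|\le1$, the tail of the multiple polylogarithm-star function is $\mathrm{Li}^\star_{(w_1,\dots,w_d)}(s_1,\dots,s_d)_{\ge N}:=\sum_{n_1\ge n_2\ge\cdots\ge n_d\ge N}\frac{w_1^{n_1}\cdots w_d^{n_d}}{n_1^{s_1}\cdots n_d^{s_d}}$. The first term on the left-hand side is taken to be $0$ when $z_1=1$; when $z_1\ne1$ the series defining $\mathrm{Li}^\star_{\mathbf z}(s_1-1,s_2,\dots,s_r)_{\ge N}$ converges. $(s)_k=s(s+1)\cdots(s+k-1)$ is the Pochhammer symbol. *)

(* Defs.v *)
From Stdlib Require Import Reals List Arith.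
From Coquelicot Require Import Coquelicot.
Import ListNotations.
Open Scope R_scope.

(* x^s := exp(s * ln x) for a real x > 0 and complex s *)
Definition cpow_pos (x : R) (s : C) : C :=
  (exp (Re s * ln x) * cos (Im s * ln x), exp (Re s * ln x) * sin (Im s * ln x)).

Definition CSeries (a : nat -> C) : C :=
  (Series (fun n => Re (a n)), Series (fun n => Im (a n))).

(* The list is given in REVERSED order
   [(w_d,s_d); ...; (w_1,s_1)]; nested_tail l m =
   sum_{n_d >= m} w_d^{n_d}/n_d^{s_d} sum_{n_{d-1} >= n_d} ... sum_{n_1 >= n_2} w_1^{n_1}/n_1^{s_1}. *)
Fixpoint nested_tail (l : list (C * C)) (m : nat) : C :=
  match l with
  | [] => RtoC 1
  | (w, s) :: rest =>
      CSeries (fun j => Cmult (Cdiv (Cpow w (m + j)) (cpow_pos (INR (m + j)) s))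
                              (nested_tail rest (m + j)))
  end.

(* Li^star_{(w_1..w_d)}(s_1..s_d)_{>= N}
   = sum_{n_1 >= n_2 >= ... >= n_d >= N} w_1^{n_1}...w_d^{n_d}/(n_1^{s_1}...n_d^{s_d}) *)
Definition LiStar_tail (ws ss : list C) (N : nat) : C :=
  nested_tail (rev (combine ws ss)) N.

Fixpoint poch (s : C) (k : nat) : C :=
  match k with
  | O => RtoC 1
  | S k' => Cmult (poch s k') (Cplus s (RtoC (INR k')))
  end.

Definition Csum_list (l : list nat) (f : nat -> C) : C :=
  fold_right (fun i acc => Cplus (f i) acc) (RtoC 0) l.

(* U_r, with s indexed 1..r *)
Definition in_U (r : nat) (s : nat -> C) : Prop :=
  forall i : nat, (1 <= i <= r)%nat -> Re (Csum_list (seq 1 i) s) > INR i.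

(* Main.v *)
Require Import Defs.
From Stdlib Require Import Reals List Arith Lia Lra.
From Coquelicot Require Import Coquelicot.
Import ListNotations.
Open Scope R_scope.


Definition cexp (w : C) : C := (exp (Re w) * cos (Im w), exp (Re w) * sin (Im w)).

Lemma Ceq2 (x y : C) : Re x = Re y -> Im x = Im y -> x = y.
Proof. destruct x, y; simpl; intros; subst; auto. Qed.

Lemma cexp_plus a b : cexp (Cplus a b) = Cmult (cexp a) (cexp b).
Proof.
  destruct a as [a1 a2], b as [b1 b2]; unfold cexp; apply Ceq2; simpl;
  rewrite exp_plus, ?cos_plus, ?sin_plus; ring.
Qed.

Lemma cexp_0 : cexp (RtoC 0) = RtoC 1.
Proof. unfold cexp; apply Ceq2; simpl; rewrite ?exp_0, ?cos_0, ?sin_0; ring. Qed.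

Lemma Cmod_cexp w : Cmod (cexp w) = exp (Re w).
Proof.
  unfold Cmod, cexp, Re, Im; cbn [fst snd].
  replace ((exp (fst w) * cos (snd w)) ^ 2 + (exp (fst w) * sin (snd w)) ^ 2)
    with (exp (fst w) ^ 2) .
  - rewrite sqrt_pow2; auto. left; apply exp_pos.
  - pose proof (sin2_cos2 (snd w)). unfold Rsqr in H. 
    replace ((exp (fst w) * cos (snd w)) ^ 2 + (exp (fst w) * sin (snd w)) ^ 2)
     with (exp (fst w) ^ 2 * (sin (snd w) * sin (snd w) + cos (snd w) * cos (snd w))) by ring.
    rewrite H; ring.
Qed.

Lemma cp_cexp x s : cpow_pos x s = cexp (Re s * ln x, Im s * ln x).
Proof. reflexivity. Qed.

Lemma cp_add x a b : cpow_pos x (Cplus a b) = Cmult (cpow_pos x a) (cpow_pos x b).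
Proof.
  rewrite !cp_cexp, <- cexp_plus. f_equal. destruct a, b; apply Ceq2; simpl; ring.
Qed.

Lemma cp_mulbase x y a : 0 < x -> 0 < y ->
  cpow_pos (x * y) a = Cmult (cpow_pos x a) (cpow_pos y a).
Proof.
  intros. rewrite !cp_cexp, <- cexp_plus, ln_mult by auto. f_equal. apply Ceq2; simpl; ring.
Qed.

Lemma cp_0 x : cpow_pos x (RtoC 0) = RtoC 1.
Proof. rewrite cp_cexp, <- cexp_0. f_equal. apply Ceq2; simpl; ring. Qed.

Lemma Cmod_cp x a : Cmod (cpow_pos x a) = Rpower x (Re a).
Proof. rewrite cp_cexp, Cmod_cexp. reflexivity. Qed.

Lemma cp_nz x a : cpow_pos x a <> RtoC 0.
Proof.
  intro H. assert (Cmod (cpow_pos x a) = 0) by (rewrite H; apply Cmod_0).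
  rewrite Cmod_cp in H0. unfold Rpower in H0. pose proof (exp_pos (Re a * ln x)). lra.
Qed.

Lemma cp_nat x j : 0 < x -> cpow_pos x (RtoC (INR j)) = RtoC (x ^ j).
Proof.
  intros. rewrite <- (Rpower_pow j x H). unfold cpow_pos, Rpower. apply Ceq2; simpl.
  - rewrite Rmult_0_l, cos_0; ring.
  - rewrite Rmult_0_l, sin_0; ring.
Qed.

Lemma cp_div u x a : Cdiv u (cpow_pos x a) = Cmult u (cpow_pos x (Copp a)).
Proof.
  assert (E : Cmult (cpow_pos x a) (cpow_pos x (Copp a)) = RtoC 1).
  { rewrite <- cp_add, <- (cp_0 x). f_equal. apply Ceq2; simpl; ring. }
  pose proof (cp_nz x a).
  replace (cpow_pos x (Copp a)) with (Cinv (cpow_pos x a)).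
  - reflexivity.
  - rewrite <- (Cmult_1_l (Cinv _)), <- E. field. auto.
Qed.

Definition CS (a : nat -> C) (l : C) : Prop :=
  is_series (fun n => Re (a n)) (Re l) /\ is_series (fun n => Im (a n)) (Im l).

Lemma CS_CSeries a l : CS a l -> CSeries a = l.
Proof.
  intros [H1 H2]. unfold CSeries. apply Ceq2; simpl; apply is_series_unique; auto.
Qed.

Lemma CS_unique a l l' : CS a l -> CS a l' -> l = l'.
Proof. intros H H'. rewrite <- (CS_CSeries _ _ H), <- (CS_CSeries _ _ H'). auto. Qed.

Lemma CS_ext a b l : (forall n, a n = b n) -> CS a l -> CS b l.
Proof.
  intros E [H1 H2]; split; eapply is_series_ext; try eassumption; intros; simpl; rewrite E; auto.
Qed.

Lemma CS_eql a l l' : CS a l -> l = l' -> CS a l'.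
Proof. intros; subst; auto. Qed.

Lemma isR_plus (a b : nat -> R) la lb : is_series a la -> is_series b lb ->
  is_series (fun n => a n + b n) (la + lb).
Proof. intros; apply (is_series_plus a b la lb); auto. Qed.

Lemma isR_scal (c : R) (a : nat -> R) la : is_series a la ->
  is_series (fun n => c * a n) (c * la).
Proof. intros; apply (is_series_scal_l c a la); auto. Qed.

Lemma CS_plus a b la lb : CS a la -> CS b lb -> CS (fun n => Cplus (a n) (b n)) (Cplus la lb).
Proof.
  intros [H1 H2] [H3 H4]; split.
  - apply (isR_plus _ _ _ _ H1 H3).
  - apply (isR_plus _ _ _ _ H2 H4).
Qed.

Lemma CS_scal c a l : CS a l -> CS (fun n => Cmult c (a n)) (Cmult c l).
Proof.
  intros [H1 H2]; split.
  - simpl. apply (isR_plus _ _ _ _ (isR_scal (fst c) _ _ H1)).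
    apply (is_series_ext (fun n => (- snd c) * snd (a n))); [intros; simpl; ring|].
    replace (- (snd c * snd l)) with (- snd c * snd l) by ring.
    apply (isR_scal _ _ _ H2).
  - simpl. apply (isR_plus _ _ _ _ (isR_scal (fst c) _ _ H2)).
    apply (is_series_ext (fun n => (snd c) * fst (a n))); [intros; simpl; ring|].
    apply (isR_scal _ _ _ H1).
Qed.



Lemma CS_opp a l : CS a l -> CS (fun n => Copp (a n)) (Copp l).
Proof.
  intro H. pose proof (CS_scal (RtoC (-1)) _ _ H) as H'.
  eapply CS_eql; [eapply CS_ext; [|exact H']|].
  - intros; apply Ceq2; simpl; ring.
  - apply Ceq2; simpl; ring.
Qed.

Lemma CS_minus a b la lb : CS a la -> CS b lb -> CS (fun n => Cminus (a n) (b n)) (Cminus la lb).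
Proof. intros H1 H2. apply (CS_plus _ _ _ _ H1 (CS_opp _ _ H2)). Qed.

Lemma isR_shift (a : nat -> R) l : is_series a l -> is_series (fun k => a (S k)) (l - a O).
Proof.
  intros H. apply (is_series_incr_1 a (l - a O)).
  assert (E : Rplus (l - a O) (a O) = l) by ring.
  exact (eq_ind_r (fun x => is_series a x) H E).
Qed.

Lemma isR_unshift (a : nat -> R) l : is_series (fun k => a (S k)) l -> is_series a (l + a O).
Proof.
  intros H. apply (is_series_decr_1 a (l + a O)).
  assert (E : Rplus (l + a O) (Ropp (a O)) = l) by ring.
  exact (eq_ind_r (fun x => is_series (fun k => a (S k)) x) H E).
Qed.

Lemma CS_shift a l : CS a l -> CS (fun k => a (S k)) (Cminus l (a O)).
Proof.
  intros [H1 H2]; split.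
  - apply (isR_shift (fun n => Re (a n))) in H1. exact H1.
  - apply (isR_shift (fun n => Im (a n))) in H2. exact H2.
Qed.

Lemma CS_unshift a l : CS (fun k => a (S k)) l -> CS a (Cplus l (a O)).
Proof.
  intros [H1 H2]; split.
  - apply (isR_unshift (fun n => Re (a n))) in H1. exact H1.
  - apply (isR_unshift (fun n => Im (a n))) in H2. exact H2.
Qed.

Lemma isR_zero : is_series (fun _ : nat => 0) 0.
Proof.
  assert (Hq : Rabs (1/2) < 1) by (rewrite Rabs_right; lra).
  pose proof (isR_scal 0 _ _ (is_series_geom (1/2) Hq)) as H.
  rewrite Rmult_0_l in H. eapply is_series_ext; [|exact H]. intros; simpl; ring.
Qed.

Lemma CS_zero a : (forall n, a n = RtoC 0) -> CS a (RtoC 0).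
Proof.
  intros E; split; simpl; eapply is_series_ext; try apply isR_zero; intros; rewrite E; reflexivity.
Qed.

Lemma im_le_Cmod' c : Rabs (Im c) <= Cmod c.
Proof.
  destruct c as [x y]; unfold Cmod, Im; cbn [fst snd].
  rewrite <- sqrt_Rsqr_abs. apply sqrt_le_1_alt. unfold Rsqr. nra.
Qed.

Lemma Cmod_le_ReIm c : Cmod c <= Rabs (Re c) + Rabs (Im c).
Proof.
  destruct c as [x y]; unfold Cmod, Re, Im; cbn [fst snd].
  rewrite <- (sqrt_Rsqr (Rabs x + Rabs y)) by (pose proof (Rabs_pos x); pose proof (Rabs_pos y); lra).
  apply sqrt_le_1_alt. unfold Rsqr.
  pose proof (Rabs_pos x); pose proof (Rabs_pos y).
  replace (x ^ 2) with (Rabs x * Rabs x) by (rewrite <- Rabs_mult, Rabs_right; [ring| nra]).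
  replace (y ^ 2) with (Rabs y * Rabs y) by (rewrite <- Rabs_mult, Rabs_right; [ring| nra]).
  nra.
Qed.

Lemma exR_le (a b : nat -> R) : (forall n, Rabs (a n) <= b n) -> ex_series b -> ex_series a.
Proof. intros H Hb. apply (@ex_series_le R_AbsRing R_CompleteNormedModule a b); auto. Qed.

Lemma CS_dom a b : (forall n, Cmod (a n) <= b n) -> ex_series b -> CS a (CSeries a).
Proof.
  intros H Hb. split; unfold CSeries; simpl; apply Series_correct; eapply exR_le; eauto;
  intros n; eapply Rle_trans; try apply H; first [apply re_le_Cmod | apply im_le_Cmod'].
Qed.

Lemma SeriesR_bound (a b : nat -> R) : (forall n, Rabs (a n) <= b n) -> ex_series b ->
  Rabs (Series a) <= Series b.
Proof.
  intros H Hb. eapply Rle_trans; [apply Series_Rabs|].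
  - eapply exR_le; [|exact Hb]. intros; rewrite Rabs_Rabsolu; auto.
  - apply Series_le; auto. intros; split; [apply Rabs_pos| auto].
Qed.

Lemma CS_bound a l b : CS a l -> (forall n, Cmod (a n) <= b n) -> ex_series b ->
  Cmod l <= 2 * Series b.
Proof.
  intros HC H Hb. rewrite <- (CS_CSeries _ _ HC). unfold CSeries.
  eapply Rle_trans; [apply Cmod_le_ReIm|]. simpl.
  assert (Rabs (Series (fun n => Re (a n))) <= Series b).
  { apply SeriesR_bound; auto. intros; eapply Rle_trans; [apply re_le_Cmod| auto]. }
  assert (Rabs (Series (fun n => Im (a n))) <= Series b).
  { apply SeriesR_bound; auto. intros; eapply Rle_trans; [apply im_le_Cmod'| auto]. }
  lra.
Qed.


Lemma is_series_lim (a : nat -> R) l : is_series a l <-> is_lim_seq (sum_n a) l.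
Proof. split; intro H; exact H. Qed.

Lemma ser_tail_lim (a : nat -> R) : ex_series a ->
  is_lim_seq (fun K => Series a - sum_n a K) 0.
Proof.
  intros H. apply Series_correct in H. apply is_series_lim in H.
  replace (Finite 0) with (Rbar_minus (Series a) (Series a)) by (simpl; f_equal; ring).
  apply is_lim_seq_minus'; auto. apply is_lim_seq_const.
Qed.

Lemma Series_tail (a : nat -> R) K : ex_series a ->
  Series (fun i => a (S K + i)%nat) = Series a - sum_n a K.
Proof.
  intros H. rewrite (Series_incr_n a (S K)) by (auto; lia). simpl.
  rewrite sum_n_Reals. ring.
Qed.

Lemma exR_scal_l (c : R) (a : nat -> R) : ex_series a -> ex_series (fun n => c * a n).
Proof. intros [l H]. exists (c * l). apply isR_scal; auto. Qed.
Lemma exR_scal_r (c : R) (a : nat -> R) : ex_series a -> ex_series (fun n => a n * c).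
Proof. intros H. apply (ex_series_ext (fun n => c * a n)); [intros; apply Rmult_comm|]. apply exR_scal_l; auto. Qed.

Section Fub.
Variables (a : nat -> nat -> R) (al be : nat -> R).
Hypotheses (Hal : forall k, 0 <= al k) (Hbe : forall j, 0 <= be j)
  (Eal : ex_series al) (Ebe : ex_series be)
  (Hb : forall k j, Rabs (a k j) <= al k * be j).

Lemma fub_row k : ex_series (a k).
Proof.
  apply (exR_le _ (fun j => al k * be j)); auto.
  apply exR_scal_l; auto.
Qed.

Lemma fub_col j : ex_series (fun k => a k j).
Proof.
  apply (exR_le _ (fun k => al k * be j)); auto.
  apply exR_scal_r; auto.
Qed.

Lemma fub_fin K : is_series (fun j => sum_n (fun k => a k j) K) (sum_n (fun k => Series (a k)) K).
Proof.
  induction K.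
  - apply (is_series_ext (a O)); [intros; rewrite sum_O; reflexivity|]. rewrite sum_O.
    apply Series_correct, fub_row.
  - rewrite sum_Sn. eapply is_series_ext; [|apply (isR_plus _ _ _ _ IHK (Series_correct _ (fub_row (S K))))].
    intros; rewrite sum_Sn; reflexivity.
Qed.

Lemma fubini_R : is_series (fun k => Series (a k)) (Series (fun j => Series (fun k => a k j))).
Proof.
  set (c := fun j => Series (fun k => a k j)).
  assert (Hc : forall j, Rabs (c j) <= Series al * be j).
  { intros j. unfold c. rewrite <- Series_scal_r. apply SeriesR_bound; auto.
    apply exR_scal_r; auto. }
  assert (Ec : ex_series c).
  { apply (exR_le _ (fun j => Series al * be j)); auto. apply exR_scal_l; auto. }
  apply is_series_lim.
  set (tau := fun K => Series al - sum_n al K).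
  assert (Htau : is_lim_seq tau 0) by (apply ser_tail_lim; auto).
  assert (Hd : forall K, Rabs (Series c - sum_n (fun k => Series (a k)) K) <= Series be * tau K).
  { intros K.
    assert (E1 : Series c - sum_n (fun k => Series (a k)) K =
                 Series (fun j => c j - sum_n (fun k => a k j) K)).
    { rewrite Series_minus; auto.
      - f_equal. symmetry. apply is_series_unique, fub_fin.
      - eexists; apply fub_fin. }
    rewrite E1.
    assert (E2 : forall j, c j - sum_n (fun k => a k j) K = Series (fun i => a (S K + i)%nat j)).
    { intros j. unfold c. rewrite (Series_tail (fun k => a k j)); auto. apply fub_col. }
    rewrite (Series_ext _ _ E2).
    rewrite <- Series_scal_r.
    apply SeriesR_bound.
    - intros j. unfold tau. rewrite <- Series_tail by auto. rewrite <- Series_scal_l.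
      apply SeriesR_bound.
      + intros i. rewrite Rmult_comm. apply Hb.
      + apply exR_scal_l. apply (ex_series_incr_n al (S K)); auto.
    - apply exR_scal_r. auto. }
  assert (Hs : is_lim_seq (fun K => Series be * tau K) 0).
  { pose proof (is_lim_seq_scal_l _ (Series be) _ Htau) as H. simpl in H. rewrite Rmult_0_r in H. exact H. }
  apply (is_lim_seq_le_le (fun K => Series c - Series be * tau K) _ (fun K => Series c + Series be * tau K)).
  - intros K. specialize (Hd K). apply Rabs_le_between in Hd. lra.
  - assert (H1: is_lim_seq (fun K => Series c - Series be * tau K) (Series c - 0))
      by (apply is_lim_seq_minus'; [apply is_lim_seq_const| exact Hs]).
    rewrite Rminus_0_r in H1. exact H1.
  - assert (H1: is_lim_seq (fun K => Series c + Series be * tau K) (Series c + 0))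
      by (apply is_lim_seq_plus'; [apply is_lim_seq_const| exact Hs]).
    rewrite Rplus_0_r in H1. exact H1.
Qed.

End Fub.

Lemma fubini_C (A : nat -> nat -> C) (al be : nat -> R) (Rw Cl : nat -> C) :
  (forall k, 0 <= al k) -> (forall j, 0 <= be j) -> ex_series al -> ex_series be ->
  (forall k j, Cmod (A k j) <= al k * be j) ->
  (forall k, CS (A k) (Rw k)) -> (forall j, CS (fun k => A k j) (Cl j)) ->
  exists S, CS Rw S /\ CS Cl S.
Proof.
  intros Hal Hbe Eal Ebe Hb HR HC.
  assert (HbR : forall k j, Rabs (Re (A k j)) <= al k * be j)
    by (intros; eapply Rle_trans; [apply re_le_Cmod| auto]).
  assert (HbI : forall k j, Rabs (Im (A k j)) <= al k * be j)
    by (intros; eapply Rle_trans; [apply im_le_Cmod'| auto]).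
  pose proof (fubini_R (fun k j => Re (A k j)) al be Eal Ebe HbR) as F1.
  pose proof (fubini_R (fun k j => Im (A k j)) al be Eal Ebe HbI) as F2.
  pose proof (fubini_R (fun j k => Re (A k j)) be al Ebe Eal ltac:(intros; rewrite Rmult_comm; auto)) as F3.
  pose proof (fubini_R (fun j k => Im (A k j)) be al Ebe Eal ltac:(intros; rewrite Rmult_comm; auto)) as F4.
  exists (Series (fun j => Series (fun k => Re (A k j))), Series (fun j => Series (fun k => Im (A k j)))).
  apply is_series_unique in F1 as U1. apply is_series_unique in F2 as U2.
  split; split; simpl.
  - eapply is_series_ext; [|exact F1]. intros k. simpl. first [apply is_series_unique, HR | symmetry; apply is_series_unique, HR].
  - eapply is_series_ext; [|exact F2]. intros k. simpl. first [apply is_series_unique, HR | symmetry; apply is_series_unique, HR].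
  - rewrite <- U1. eapply is_series_ext; [|exact F3]. intros j. simpl. first [apply is_series_unique, HC | symmetry; apply is_series_unique, HC].
  - rewrite <- U2. eapply is_series_ext; [|exact F4]. intros j. simpl. first [apply is_series_unique, HC | symmetry; apply is_series_unique, HC].
Qed.


Lemma ex_series_pos_bounded (a : nat -> R) M :
  (forall n, 0 <= a n) -> (forall n, sum_f_R0 a n <= M) -> ex_series a /\ Series a <= M.
Proof.
  intros Hp HM.
  assert (Hinc : forall n, sum_n a n <= sum_n a (S n)).
  { intros n. rewrite !sum_n_Reals. simpl. specialize (Hp (S n)). lra. }
  assert (HM' : forall n, sum_n a n <= M) by (intros; rewrite sum_n_Reals; auto).
  destruct (ex_finite_lim_seq_incr _ M Hinc HM') as [l Hl].
  assert (Hs : is_series a l) by (apply is_series_lim; exact Hl).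
  split; [exists l; auto|].
  rewrite (is_series_unique _ _ Hs).
  pose proof (is_lim_seq_le _ _ l M HM' Hl (is_lim_seq_const M)). simpl in H. auto.
Qed.

Lemma Rpower_pos' x y : 0 < Rpower x y.
Proof. unfold Rpower. apply exp_pos. Qed.

Lemma TE_step (b x : R) : 1 < b -> 1 <= x ->
  (b - 1) * Rpower (x + 1) (- b) <= Rpower x (1 - b) - Rpower (x + 1) (1 - b).
Proof.
  intros Hb Hx.
  destruct (MVT_cor2 (fun y => Rpower y (1 - b)) (fun y => (1 - b) * Rpower y (1 - b - 1)) x (x+1))
    as [c [Hc1 Hc2]]; [lra| |].
  - intros c Hc. apply derivable_pt_lim_power. lra.
  - replace (1 - b - 1) with (- b) in Hc1 by ring.
    assert (Rpower (x+1) (-b) <= Rpower c (-b)).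
    { rewrite !Rpower_Ropp. apply Rinv_le_contravar. apply Rpower_pos'.
      apply Rle_Rpower_l; lra. }
    replace (x + 1 - x) with 1 in Hc1 by ring. nra.
Qed.

Lemma Rpower_Sx_le (b x : R) : 0 <= b -> 1 <= x -> Rpower x (- b) <= Rpower 2 b * Rpower (x + 1) (- b).
Proof.
  intros Hb Hx. rewrite !Rpower_Ropp.
  assert (Rpower (x+1) b <= Rpower 2 b * Rpower x b).
  { rewrite Rpower_mult_distr by lra. apply Rle_Rpower_l; lra. }
  pose proof (Rpower_pos' x b). pose proof (Rpower_pos' (x+1) b). pose proof (Rpower_pos' 2 b).
  apply (Rmult_le_reg_r (Rpower x b * Rpower (x+1) b)). nra.
  field_simplify; try lra. 
Qed.

Definition KTE (b : R) := Rpower 2 b / (b - 1).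

Lemma TE (b : R) (m : nat) : 1 < b -> (1 <= m)%nat ->
  ex_series (fun j => Rpower (INR (m + j)) (- b)) /\
  Series (fun j => Rpower (INR (m + j)) (- b)) <= KTE b * Rpower (INR m) (1 - b).
Proof.
  intros Hb Hm.
  assert (Hm' : 1 <= INR m) by (apply (le_INR 1); auto).
  assert (Tel : forall J, (b - 1) * sum_f_R0 (fun j => Rpower (INR (m + j) + 1) (- b)) J
                         <= Rpower (INR m) (1 - b) - Rpower (INR (m + J) + 1) (1 - b)).
  { induction J.
    - simpl. rewrite Nat.add_0_r. apply TE_step; auto.
    - simpl sum_f_R0. rewrite Rmult_plus_distr_l.
      pose proof (TE_step b (INR (m + S J)) Hb) as T.
      replace (INR (m + S J)) with (INR (m + J) + 1) in * by (rewrite Nat.add_succ_r, S_INR; ring).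
      assert (1 <= INR (m + J) + 1) by (pose proof (pos_INR (m+J)); lra).
      specialize (T H). lra. }
  apply ex_series_pos_bounded.
  - intros; left; apply Rpower_pos'.
  - intros J. unfold KTE.
    assert (sum_f_R0 (fun j => Rpower (INR (m + j)) (- b)) J <=
            Rpower 2 b * sum_f_R0 (fun j => Rpower (INR (m + j) + 1) (- b)) J).
    { induction J; simpl.
      - apply Rpower_Sx_le; [lra| rewrite Nat.add_0_r; auto].
      - rewrite Rmult_plus_distr_l. apply Rplus_le_compat; auto. apply Rpower_Sx_le; [lra|].
        apply (le_INR 1); lia. }
    specialize (Tel J).
    pose proof (Rpower_pos' (INR (m + J) + 1) (1 - b)).
    pose proof (Rpower_pos' 2 b).
    assert (sum_f_R0 (fun j => Rpower (INR (m + j) + 1) (- b)) J <= Rpower (INR m) (1 - b) / (b - 1)).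
    { apply (Rmult_le_reg_l (b - 1)); [lra|]. field_simplify; lra. }
    eapply Rle_trans; [exact H|].
    replace (Rpower 2 b / (b - 1) * Rpower (INR m) (1 - b)) with (Rpower 2 b * (Rpower (INR m) (1 - b) / (b - 1))) by (field; lra).
    apply Rmult_le_compat_l; lra.
Qed.


Definition CDer (f : R -> C) (t : R) (l : C) : Prop :=
  is_derive (fun u => Re (f u)) t (Re l) /\ is_derive (fun u => Im (f u)) t (Im l).

Lemma isd_eq (f : R -> R) x l l' : is_derive f x l -> l = l' -> is_derive f x l'.
Proof. intros; subst; auto. Qed.

Lemma isd_plus (f g : R -> R) x a b : is_derive f x a -> is_derive g x b ->
  is_derive (fun u => f u + g u) x (a + b).
Proof. intros. apply (is_derive_plus f g x a b); auto. Qed.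

Lemma isd_minus (f g : R -> R) x a b : is_derive f x a -> is_derive g x b ->
  is_derive (fun u => f u - g u) x (a - b).
Proof. intros. apply (is_derive_minus f g x a b); auto. Qed.

Lemma isd_mult (f g : R -> R) x a b : is_derive f x a -> is_derive g x b ->
  is_derive (fun u => f u * g u) x (a * g x + f x * b).
Proof. intros. apply (is_derive_mult f g x a b); auto. intros; apply Rmult_comm. Qed.

Lemma isd_const (c : R) x : is_derive (fun _ => c) x 0.
Proof. apply (is_derive_const c x). Qed.

Lemma CDer_plus f g t a b : CDer f t a -> CDer g t b -> CDer (fun u => Cplus (f u) (g u)) t (Cplus a b).
Proof.
  intros [H1 H2] [H3 H4]; split; simpl.
  - apply (isd_plus _ _ _ _ _ H1 H3).
  - apply (isd_plus _ _ _ _ _ H2 H4).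
Qed.

Lemma CDer_mult f g t a b : CDer f t a -> CDer g t b ->
  CDer (fun u => Cmult (f u) (g u)) t (Cplus (Cmult a (g t)) (Cmult (f t) b)).
Proof.
  intros [H1 H2] [H3 H4]; split; simpl.
  - eapply isd_eq; [apply (isd_minus _ _ _ _ _ (isd_mult _ _ _ _ _ H1 H3) (isd_mult _ _ _ _ _ H2 H4))|].
    unfold Re, Im; simpl; ring.
  - eapply isd_eq; [apply (isd_plus _ _ _ _ _ (isd_mult _ _ _ _ _ H1 H4) (isd_mult _ _ _ _ _ H2 H3))|].
    unfold Re, Im; simpl; ring.
Qed.

Lemma CDer_const (c : C) t : CDer (fun _ => c) t (RtoC 0).
Proof. split; simpl; apply isd_const. Qed.

Lemma CDer_pow (n : nat) t : CDer (fun u => RtoC (u ^ n)) t (RtoC (INR n * t ^ (pred n))).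
Proof.
  split; simpl.
  - apply (isd_eq _ _ (INR n * 1 * t ^ pred n)); [apply (is_derive_pow (fun u => u) n t 1); apply (is_derive_id t)|].
    unfold Re; simpl; ring.
  - apply isd_const.
Qed.

Lemma CDer_scal (c : C) f t a : CDer f t a -> CDer (fun u => Cmult c (f u)) t (Cmult c a).
Proof.
  intros H. eapply CDer_mult in H; [|apply (CDer_const c t)].
  destruct H as [H1 H2]; split; (eapply isd_eq; [eassumption|]); simpl; ring.
Qed.

Fixpoint binc (a : C) (j : nat) : C :=
  match j with
  | O => RtoC 1
  | S j' => Cdiv (Cmult (binc a j') (Cminus a (RtoC (INR j')))) (RtoC (INR (S j')))
  end.

Fixpoint Fp (a : C) (M : nat) (t : R) : C :=
  match M with
  | O => RtoC 1
  | S M' => Cplus (Fp a M' t) (Cmult (binc a (S M')) (RtoC (t ^ S M')))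
  end.

Fixpoint Fd (a : C) (M : nat) (t : R) : C :=
  match M with
  | O => RtoC 0
  | S M' => Cplus (Fd a M' t) (Cmult (binc a (S M')) (RtoC (INR (S M') * t ^ M')))
  end.

Lemma CDer_Fp a M t : CDer (Fp a M) t (Fd a M t).
Proof.
  induction M; simpl.
  - apply CDer_const.
  - apply CDer_plus; auto. apply CDer_scal. apply (CDer_pow (S M) t).
Qed.

Lemma INR_S_nz j : RtoC (INR (S j)) <> RtoC 0.
Proof. intro H. apply RtoC_inj in H. pose proof (pos_INR j). rewrite S_INR in H. lra. Qed.

Lemma binc_rec a M : Cmult (RtoC (INR (S (S M)))) (binc a (S (S M))) =
  Cmult (binc a (S M)) (Cminus a (RtoC (INR (S M)))).
Proof.
  change (binc a (S (S M))) with (Cdiv (Cmult (binc a (S M)) (Cminus a (RtoC (INR (S M))))) (RtoC (INR (S (S M))))).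
  field. apply INR_S_nz.
Qed.

Lemma key_identity a M t :
  Cminus (Cmult (RtoC (1 + t)) (Fd a M t)) (Cmult a (Fp a M t)) =
  Copp (Cmult (RtoC (INR (S M))) (Cmult (binc a (S M)) (RtoC (t ^ M)))).
Proof.
  induction M.
  - simpl. apply Ceq2; simpl; field.
  - change (Fd a (S M) t) with (Cplus (Fd a M t) (Cmult (binc a (S M)) (RtoC (INR (S M) * t ^ M)))).
    change (Fp a (S M) t) with (Cplus (Fp a M t) (Cmult (binc a (S M)) (RtoC (t ^ S M)))).
    transitivity (Cplus (Cminus (Cmult (RtoC (1 + t)) (Fd a M t)) (Cmult a (Fp a M t)))
       (Cminus (Cmult (RtoC (1 + t)) (Cmult (binc a (S M)) (RtoC (INR (S M) * t ^ M))))
               (Cmult a (Cmult (binc a (S M)) (RtoC (t ^ S M)))))); [ring|].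
    rewrite IHM.
    change (binc a (S (S M))) with (Cdiv (Cmult (binc a (S M)) (Cminus a (RtoC (INR (S M))))) (RtoC (INR (S (S M))))).
    pose proof (INR_S_nz (S M)) as Hnz.
    rewrite (S_INR (S M)) in *. 
    rewrite ?RtoC_mult, ?RtoC_plus, ?RtoC_pow in *.
    replace (Cpow (RtoC t) (S M)) with (Cmult (RtoC t) (Cpow (RtoC t) M)) by reflexivity.
    set (p := Cpow (RtoC t) M). set (q := RtoC (INR (S M))). set (b := binc a (S M)).
    field. exact Hnz.
Qed.

Definition Ef (a : C) (t : R) : C := cpow_pos (1 + t) (Copp a).

Lemma CDer_Ef a t : -1 < t ->
  CDer (Ef a) t (Cmult (Cmult (Copp a) (Ef a t)) (RtoC (/ (1 + t)))).
Proof.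
  intros Ht. unfold Ef, cpow_pos.
  set (p := Re (Copp a)). set (q := Im (Copp a)).
  split; cbn [Re Im fst snd].
  - apply (isd_eq _ _ (exp (p * ln (1 + t)) * (p * / (1+t)) * cos (q * ln (1 + t)) +
                       exp (p * ln (1 + t)) * (- sin (q * ln (1 + t)) * (q * / (1 + t))))).
    + auto_derive. lra. ring.
    + unfold p, q. destruct a; unfold Re, Im; simpl. field. lra.
  - apply (isd_eq _ _ (exp (p * ln (1 + t)) * (p * / (1+t)) * sin (q * ln (1 + t)) +
                       exp (p * ln (1 + t)) * (cos (q * ln (1 + t)) * (q * / (1 + t))))).
    + auto_derive. lra. ring.
    + unfold p, q. destruct a; unfold Re, Im; simpl. field. lra.
Qed.

Definition Hf (a : C) (M : nat) (t : R) : C := Cmult (Fp a M t) (Ef a t).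

Lemma CDer_Hf a M u : -1 < u ->
  CDer (Hf a M) u (Copp (Cmult (Cmult (Ef a u) (RtoC (/ (1 + u))))
                     (Cmult (RtoC (INR (S M))) (Cmult (binc a (S M)) (RtoC (u ^ M)))))).
Proof.
  intros Hu. pose proof (CDer_mult _ _ u _ _ (CDer_Fp a M u) (CDer_Ef a u Hu)) as H.
  unfold Hf. destruct H as [H1 H2]. 
  assert (E : Cplus (Cmult (Fd a M u) (Ef a u))
             (Cmult (Fp a M u) (Cmult (Cmult (Copp a) (Ef a u)) (RtoC (/ (1 + u))))) =
           Copp (Cmult (Cmult (Ef a u) (RtoC (/ (1 + u))))
                     (Cmult (RtoC (INR (S M))) (Cmult (binc a (S M)) (RtoC (u ^ M)))))).
  { assert (K := key_identity a M u).
    transitivity (Cmult (Cmult (Ef a u) (RtoC (/(1+u)))) (Cminus (Cmult (RtoC (1+u)) (Fd a M u)) (Cmult a (Fp a M u)))).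
    - assert (Hnz : RtoC (1 + u) <> RtoC 0) by (intro X; apply RtoC_inj in X; lra).
      rewrite RtoC_inv by lra. field. auto.
    - rewrite K; ring. }
  rewrite <- E. split; auto.
Qed.

Lemma MVT_comp (g : R -> R) (g' : R -> R) t B : 0 < t ->
  (forall u, 0 <= u <= t -> is_derive g u (g' u)) -> (forall u, 0 <= u <= t -> Rabs (g' u) <= B) ->
  Rabs (g t - g 0) <= B * t.
Proof.
  intros Ht Hd HB.
  destruct (MVT_cor2 g g' 0 t Ht) as [c [Hc1 Hc2]].
  - intros c Hc. apply is_derive_Reals. apply Hd; auto.
  - rewrite Hc1, Rabs_mult, Rminus_0_r, (Rabs_right t) by lra.
    apply Rmult_le_compat_r; [lra|]. apply HB; lra.
Qed.

Lemma comp_bound (g g' : R -> C) t B : 0 < t ->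
  (forall u, 0 <= u <= t -> CDer g u (g' u)) -> (forall u, 0 <= u <= t -> Cmod (g' u) <= B) ->
  Rabs (Re (g t) - Re (g 0)) <= B * t /\ Rabs (Im (g t) - Im (g 0)) <= B * t.
Proof.
  intros Ht Hd HB. split.
  - apply (MVT_comp (fun u => Re (g u)) (fun u => Re (g' u))); auto.
    + intros; apply Hd; auto.
    + intros; eapply Rle_trans; [apply re_le_Cmod| auto].
  - apply (MVT_comp (fun u => Im (g u)) (fun u => Im (g' u))); auto.
    + intros; apply Hd; auto.
    + intros; eapply Rle_trans; [apply im_le_Cmod'| auto].
Qed.

Fixpoint rbinc (A : R) (j : nat) : R :=
  match j with
  | O => 1
  | S j' => rbinc A j' * (A + INR j') / INR (S j')
  end.

Lemma binc_S a j : binc a (S j) = Cdiv (Cmult (binc a j) (Cminus a (RtoC (INR j)))) (RtoC (INR (S j))).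
Proof. reflexivity. Qed.
Lemma rbinc_S A j : rbinc A (S j) = rbinc A j * (A + INR j) / INR (S j).
Proof. reflexivity. Qed.

Lemma rbinc_pos A j : 0 < A -> 0 < rbinc A j.
Proof.
  intros HA. induction j; [simpl; lra|rewrite rbinc_S].
  pose proof (pos_INR j). pose proof (lt_0_INR (S j) ltac:(lia)).
  apply Rdiv_lt_0_compat; [|auto]. apply Rmult_lt_0_compat; lra.
Qed.


Lemma Cmod_binc a j : Cmod (binc a j) <= rbinc (Cmod a + 1) j.
Proof.
  induction j; [|rewrite binc_S, rbinc_S].
  - simpl. rewrite Cmod_1; lra.
  - pose proof (lt_0_INR (S j) ltac:(lia)).
    rewrite Cmod_div by apply INR_S_nz. rewrite Cmod_mult, Cmod_R, (Rabs_right (INR (S j))) by lra.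
    unfold Rdiv. apply Rmult_le_compat_r; [left; apply Rinv_0_lt_compat; auto|].
    apply Rmult_le_compat; try apply Cmod_ge_0; auto.
    eapply Rle_trans; [apply Cmod_triangle|]. rewrite Cmod_opp, Cmod_R, Rabs_right; [lra|].
    apply Rle_ge, pos_INR.
Qed.

Lemma lim_by_bound (u e : nat -> R) l : (forall n, Rabs (u n - l) <= e n) -> is_lim_seq e 0 ->
  is_lim_seq u l.
Proof.
  intros H He.
  apply (is_lim_seq_le_le (fun n => l - e n) _ (fun n => l + e n)).
  - intros n. specialize (H n). apply Rabs_le_between in H. lra.
  - assert (H1: is_lim_seq (fun n => l - e n) (l - 0)) by (apply is_lim_seq_minus'; [apply is_lim_seq_const| exact He]).
    rewrite Rminus_0_r in H1. exact H1.
  - assert (H1: is_lim_seq (fun n => l + e n) (l + 0)) by (apply is_lim_seq_plus'; [apply is_lim_seq_const| exact He]).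
    rewrite Rplus_0_r in H1. exact H1.
Qed.

Lemma lim_inv_S : is_lim_seq (fun M => / INR (S M)) 0.
Proof.
  assert (H : is_lim_seq (fun M => INR (S M)) p_infty).
  { apply (is_lim_seq_incr_1 INR). apply is_lim_seq_INR. }
  apply is_lim_seq_inv in H; [|discriminate]. simpl in H. exact H.
Qed.

Definition wseq (A t : R) (M : nat) : R := INR (S M) * rbinc A (S M) * t ^ M.

Lemma wseq_series A t : 0 < A -> 0 < t < 1 -> ex_series (wseq A t).
Proof.
  intros HA Ht.
  assert (Hpos : forall M, 0 < wseq A t M).
  { intros M. unfold wseq. apply Rmult_lt_0_compat; [apply Rmult_lt_0_compat|].
    apply lt_0_INR; lia. apply rbinc_pos; auto. apply pow_lt; lra. }
  apply ex_series_Rabs. apply (ex_series_DAlembert _ t); [lra| intros n; specialize (Hpos n); lra|].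
  apply (is_lim_seq_ext (fun M => t + t * A * / INR (S M))).
  - intros M. rewrite Rabs_right.
    2: { apply Rle_ge, Rlt_le, Rdiv_lt_0_compat; auto. }
    unfold wseq. rewrite (rbinc_S A (S M)). simpl pow.
    pose proof (lt_0_INR (S M) ltac:(lia)). pose proof (lt_0_INR (S (S M)) ltac:(lia)).
    pose proof (rbinc_pos A (S M) HA). pose proof (pow_lt t M ltac:(lra)).
    rewrite (S_INR (S M)). rewrite S_INR in *. field. repeat split; lra.
  - pose proof (is_lim_seq_scal_l _ (t * A) _ lim_inv_S) as H. simpl in H. rewrite Rmult_0_r in H.
    assert (H1 : is_lim_seq (fun M => t + t * A * / INR (S M)) (t + 0))
      by (apply is_lim_seq_plus'; [apply is_lim_seq_const| exact H]).
    rewrite Rplus_0_r in H1. exact H1.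
Qed.

Lemma Fp_0 a M : Fp a M 0 = RtoC 1.
Proof.
  induction M; [reflexivity|]. change (Fp a (S M) 0) with (Cplus (Fp a M 0) (Cmult (binc a (S M)) (RtoC (0 ^ S M)))).
  rewrite IHM. simpl pow. rewrite Rmult_0_l. apply Ceq2; simpl; ring.
Qed.

Lemma Ef_0 a : Ef a 0 = RtoC 1.
Proof.
  unfold Ef, cpow_pos. rewrite Rplus_0_r, ln_1, !Rmult_0_r, exp_0, cos_0, sin_0.
  apply Ceq2; simpl; ring.
Qed.

Lemma Hf_0 a M : Hf a M 0 = RtoC 1.
Proof. unfold Hf. rewrite Fp_0, Ef_0. apply Ceq2; simpl; ring. Qed.

Lemma ln_small u : 0 <= u <= 1/2 -> 0 <= ln (1 + u) <= 1.
Proof.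
  intros Hu. split.
  - assert (ln 1 <= ln (1 + u)) by (apply ln_le; lra). rewrite ln_1 in H; lra.
  - pose proof (exp_ineq1 1 ltac:(lra)).
    assert (ln (1 + u) <= ln (exp 1)) by (apply ln_le; lra). rewrite ln_exp in H0; lra.
Qed.

Lemma exp_mono x y : x <= y -> exp x <= exp y.
Proof. intros H. destruct (Rle_lt_or_eq_dec _ _ H). left; apply exp_increasing; auto. subst; lra. Qed.

Lemma Cmod_Hd_bound a M t u : 0 <= u <= t -> t <= 1/2 ->
  Cmod (Copp (Cmult (Cmult (Ef a u) (RtoC (/ (1 + u))))
                     (Cmult (RtoC (INR (S M))) (Cmult (binc a (S M)) (RtoC (u ^ M))))))
  <= exp (Rabs (Re a)) * wseq (Cmod a + 1) t M.
Proof.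
  intros Hu Ht. rewrite Cmod_opp, !Cmod_mult, !Cmod_R.
  unfold wseq.
  assert (H1 : Cmod (Ef a u) <= exp (Rabs (Re a))).
  { unfold Ef. rewrite Cmod_cp. unfold Rpower. 
    assert (Re (Copp a) = - Re a) by (destruct a; reflexivity). rewrite H.
    pose proof (ln_small u ltac:(lra)).
    pose proof (Rle_abs (- Re a)) as H2. rewrite Rabs_Ropp in H2.
    pose proof (Rmult_le_pos (Rabs (Re a) - - Re a) (ln (1 + u)) ltac:(lra) ltac:(lra)).
    pose proof (Rmult_le_pos (Rabs (Re a)) (1 - ln (1 + u)) (Rabs_pos _) ltac:(lra)).
    apply exp_mono. nra. }
  assert (H2 : Rabs (/ (1 + u)) <= 1).
  { rewrite Rabs_right by (apply Rle_ge, Rlt_le, Rinv_0_lt_compat; lra).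
    rewrite <- Rinv_1. apply Rinv_le_contravar; lra. }
  assert (H3 : Rabs (INR (S M)) = INR (S M)) by (apply Rabs_right, Rle_ge, pos_INR).
  assert (H4 : Rabs (u ^ M) <= t ^ M).
  { rewrite Rabs_right by (apply Rle_ge, pow_le; lra). apply pow_incr; lra. }
  pose proof (Cmod_binc a (S M)) as H5.
  rewrite H3.
  pose proof (Cmod_ge_0 (Ef a u)). pose proof (Rabs_pos (/ (1+u))). pose proof (Cmod_ge_0 (binc a (S M))).
  pose proof (Rabs_pos (u ^ M)). pose proof (pos_INR (S M)).
  pose proof (exp_pos (Rabs (Re a))).
  assert (Cmod (binc a (S M)) * Rabs (u ^ M) <= rbinc (Cmod a + 1) (S M) * t ^ M)
    by (apply Rmult_le_compat; auto).
  assert (INR (S M) * (Cmod (binc a (S M)) * Rabs (u ^ M)) <= INR (S M) * (rbinc (Cmod a + 1) (S M) * t ^ M))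
    by (apply Rmult_le_compat_l; auto).
  assert (Cmod (Ef a u) * Rabs (/ (1 + u)) <= exp (Rabs (Re a))).
  { replace (exp (Rabs (Re a))) with (exp (Rabs (Re a)) * 1) by ring. apply Rmult_le_compat; auto. }
  pose proof (Rmult_le_compat _ _ _ _ (Rmult_le_pos _ _ H H0) (Rmult_le_pos _ _ H8 (Rmult_le_pos _ _ H6 H7)) H12 H11) as H14.
  replace (exp (Rabs (Re a)) * (INR (S M) * rbinc (Cmod a + 1) (S M) * t ^ M)) with
    (exp (Rabs (Re a)) * (INR (S M) * (rbinc (Cmod a + 1) (S M) * t ^ M))) by ring.
  exact H14.
Qed.

Lemma Hf_lim a t : 0 < t <= 1/2 ->
  is_lim_seq (fun M => Re (Hf a M t)) 1 /\ is_lim_seq (fun M => Im (Hf a M t)) 0.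
Proof.
  intros Ht.
  set (K := exp (Rabs (Re a))).
  assert (Hw : is_lim_seq (fun M => K * wseq (Cmod a + 1) t M * t) 0).
  { pose proof (ex_series_lim_0 _ (wseq_series (Cmod a + 1) t ltac:(pose proof (Cmod_ge_0 a); lra) ltac:(lra))) as H.
    pose proof (is_lim_seq_scal_l _ K _ H) as H'. simpl in H'. rewrite Rmult_0_r in H'.
    pose proof (is_lim_seq_scal_r _ t _ H') as H''. simpl in H''. rewrite Rmult_0_l in H''. exact H''. }
  assert (B : forall M, Rabs (Re (Hf a M t) - Re (Hf a M 0)) <= K * wseq (Cmod a + 1) t M * t /\
                        Rabs (Im (Hf a M t) - Im (Hf a M 0)) <= K * wseq (Cmod a + 1) t M * t).
  { intros M. apply comp_bound with (g' := fun u => Copp (Cmult (Cmult (Ef a u) (RtoC (/ (1 + u))))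
                     (Cmult (RtoC (INR (S M))) (Cmult (binc a (S M)) (RtoC (u ^ M)))))); [lra| |].
    - intros u Hu. apply CDer_Hf. lra.
    - intros u Hu. apply Cmod_Hd_bound; lra. }
  split; (eapply lim_by_bound; [|exact Hw]); intros M; destruct (B M) as [B1 B2];
    rewrite Hf_0 in B1, B2; simpl in B1, B2; [exact B1|].
  rewrite Rminus_0_r. rewrite Rminus_0_r in B2. exact B2.
Qed.

Lemma Fp_Hf a M t : -1 < t -> Fp a M t = Cmult (Hf a M t) (cpow_pos (1 + t) a).
Proof.
  intros Ht. unfold Hf, Ef.
  assert (E : Cmult (cpow_pos (1 + t) (Copp a)) (cpow_pos (1 + t) a) = RtoC 1).
  { rewrite <- cp_add, <- (cp_0 (1 + t)). f_equal. apply Ceq2; simpl; ring. }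
  rewrite <- Cmult_assoc, E. ring.
Qed.

Lemma binom_series a t : 0 < t <= 1/2 ->
  CS (fun j => Cmult (binc a j) (RtoC (t ^ j))) (cpow_pos (1 + t) a).
Proof.
  intros Ht. destruct (Hf_lim a t Ht) as [L1 L2].
  set (c := cpow_pos (1 + t) a).
  assert (PS : forall M, sum_n (fun j => Re (Cmult (binc a j) (RtoC (t ^ j)))) M = Re (Fp a M t) /\
                         sum_n (fun j => Im (Cmult (binc a j) (RtoC (t ^ j)))) M = Im (Fp a M t)).
  { intros M; rewrite !sum_n_Reals. induction M.
    - simpl. split; ring.
    - destruct IHM as [I1 I2]. change (Fp a (S M) t) with (Cplus (Fp a M t) (Cmult (binc a (S M)) (RtoC (t ^ S M)))).
      rewrite !tech5, I1, I2. split; reflexivity. }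
  split; apply is_series_lim.
  - apply (is_lim_seq_ext (fun M => Re (Hf a M t) * Re c - Im (Hf a M t) * Im c)).
    { intros M. rewrite (proj1 (PS M)), Fp_Hf by lra. reflexivity. }
    assert (H : is_lim_seq (fun M => Re (Hf a M t) * Re c - Im (Hf a M t) * Im c) (1 * Re c - 0 * Im c))
      by (apply is_lim_seq_minus'; apply is_lim_seq_mult'; auto; apply is_lim_seq_const).
    replace (1 * Re c - 0 * Im c) with (Re c) in H by ring. exact H.
  - apply (is_lim_seq_ext (fun M => Re (Hf a M t) * Im c + Im (Hf a M t) * Re c)).
    { intros M. rewrite (proj2 (PS M)), Fp_Hf by lra. reflexivity. }
    assert (H : is_lim_seq (fun M => Re (Hf a M t) * Im c + Im (Hf a M t) * Re c) (1 * Im c + 0 * Re c))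
      by (apply is_lim_seq_plus'; apply is_lim_seq_mult'; auto; apply is_lim_seq_const).
    replace (1 * Im c + 0 * Re c) with (Im c) in H by ring. exact H.
Qed.

Definition cterm (s : C) (k : nat) : C :=
  Cmult (Cpow (RtoC (-1)) k) (Cdiv (poch (Cminus s (RtoC 1)) (S k)) (RtoC (INR (fact (S k))))).

Lemma fact_nz j : RtoC (INR (fact j)) <> RtoC 0.
Proof. intro H. apply RtoC_inj in H. apply (INR_fact_neq_0 j); auto. Qed.

Lemma binc_poch s j : binc (Cminus (RtoC 1) s) j =
  Cmult (Cpow (RtoC (-1)) j) (Cdiv (poch (Cminus s (RtoC 1)) j) (RtoC (INR (fact j)))).
Proof.
  induction j.
  - simpl. apply Ceq2; simpl; field.
  - rewrite binc_S, IHj.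
    change (poch (Cminus s (RtoC 1)) (S j)) with (Cmult (poch (Cminus s (RtoC 1)) j) (Cplus (Cminus s (RtoC 1)) (RtoC (INR j)))).
    change (Cpow (RtoC (-1)) (S j)) with (Cmult (RtoC (-1)) (Cpow (RtoC (-1)) j)).
    replace (fact (S j)) with (S j * fact j)%nat by reflexivity.
    rewrite mult_INR, RtoC_mult.
    pose proof (fact_nz j). pose proof (INR_S_nz j).
    set (q := RtoC (INR (S j))). set (f := RtoC (INR (fact j))).
    set (p := poch (Cminus s (RtoC 1)) j). set (m := Cpow (RtoC (-1)) j).
    field. split; auto.
Qed.

Lemma cterm_binc s k : cterm s k = Copp (binc (Cminus (RtoC 1) s) (S k)).
Proof.
  rewrite binc_poch. unfold cterm.
  change (Cpow (RtoC (-1)) (S k)) with (Cmult (RtoC (-1)) (Cpow (RtoC (-1)) k)).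
  ring.
Qed.

Lemma binom_identity s (x : R) : 2 <= x ->
  CS (fun k => Cmult (cterm s k) (Cinv (cpow_pos x (Cplus s (RtoC (INR k))))))
     (Cminus (cpow_pos x (Cminus (RtoC 1) s)) (cpow_pos (x + 1) (Cminus (RtoC 1) s))).
Proof.
  intros Hx. set (a := Cminus (RtoC 1) s).
  assert (Ht : 0 < / x <= 1/2).
  { split. apply Rinv_0_lt_compat; lra. unfold Rdiv. rewrite Rmult_1_l. apply Rinv_le_contravar; lra. }
  pose proof (binom_series a (/ x) Ht) as H.
  apply (CS_scal (cpow_pos x a)) in H.
  apply CS_shift in H. apply CS_opp in H.
  eapply CS_eql; [eapply CS_ext; [|exact H]|].
  - intros k. rewrite cterm_binc. fold a.
    assert (E1 : Cmult (cpow_pos x (Cplus s (RtoC (INR k)))) (cpow_pos x a) = RtoC (x ^ S k)).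
    { rewrite <- cp_add, <- (cp_nat x (S k)) by lra. f_equal. unfold a.
      rewrite S_INR. apply Ceq2; simpl; ring. }
    assert (E2 : RtoC ((/ x) ^ S k) = Cinv (RtoC (x ^ S k))).
    { rewrite <- RtoC_inv by (apply pow_nonzero; lra). f_equal. rewrite pow_inv. reflexivity. }
    rewrite E2, <- E1.
    pose proof (cp_nz x (Cplus s (RtoC (INR k)))). pose proof (cp_nz x a).
    field. split; auto.
  - assert (E3 : Cmult (cpow_pos x a) (cpow_pos (1 + / x) a) = cpow_pos (x + 1) a).
    { rewrite <- cp_mulbase by (try lra; pose proof (Rinv_0_lt_compat x); lra).
      f_equal. field. lra. }
    rewrite E3. simpl binc. rewrite pow_O. ring.
Qed.


Lemma Rpower_lim0 b : 0 < b -> is_lim_seq (fun n => Rpower (INR n) (- b)) 0.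
Proof.
  intros Hb.
  assert (H1 : is_lim_seq (fun n => ln (INR n)) p_infty).
  { apply (is_lim_comp_seq ln INR p_infty p_infty is_lim_ln_p).
    - exists O; intros; discriminate.
    - apply is_lim_seq_INR. }
  pose proof (is_lim_seq_scal_l _ (- b) _ H1) as H2.
  replace (Rbar_mult (- b) p_infty) with m_infty in H2.
  2: { simpl. destruct (Rle_dec 0 (- b)); [exfalso; lra|reflexivity]. }
  apply (is_lim_comp_seq exp _ m_infty 0 is_lim_exp_m) in H2.
  - unfold Rpower. eapply is_lim_seq_ext; [|exact H2]. intros; simpl; reflexivity.
  - exists O; intros; discriminate.
Qed.

Definition Clim (u : nat -> C) (l : C) : Prop :=
  is_lim_seq (fun n => Re (u n)) (Re l) /\ is_lim_seq (fun n => Im (u n)) (Im l).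

Fixpoint csum (f : nat -> C) (M : nat) : C :=
  match M with O => f O | S M' => Cplus (csum f M') (f (S M')) end.

Lemma CS_Clim a l : CS a l <-> Clim (csum a) l.
Proof.
  assert (E1 : forall M, sum_n (fun n => Re (a n)) M = Re (csum a M)).
  { intros M; rewrite sum_n_Reals; induction M; simpl; auto. rewrite IHM; reflexivity. }
  assert (E2 : forall M, sum_n (fun n => Im (a n)) M = Im (csum a M)).
  { intros M; rewrite sum_n_Reals; induction M; simpl; auto. rewrite IHM; reflexivity. }
  unfold CS, Clim. rewrite !is_series_lim. split; intros [H1 H2]; split;
  (eapply is_lim_seq_ext; [|eassumption]); intros; simpl; auto.
Qed.

Lemma Clim_ext u v l : (forall n, u n = v n) -> Clim u l -> Clim v l.
Proof. intros E [H1 H2]; split; (eapply is_lim_seq_ext; [|eassumption]); intros; simpl; rewrite E; auto. Qed.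

Lemma Clim_plus u v a b : Clim u a -> Clim v b -> Clim (fun n => Cplus (u n) (v n)) (Cplus a b).
Proof. intros [H1 H2] [H3 H4]; split; simpl; apply is_lim_seq_plus'; auto. Qed.

Lemma Clim_scal c u a : Clim u a -> Clim (fun n => Cmult c (u n)) (Cmult c a).
Proof.
  intros [H1 H2]; split; simpl.
  - apply is_lim_seq_minus'; apply is_lim_seq_mult'; auto; apply is_lim_seq_const.
  - apply is_lim_seq_plus'; apply is_lim_seq_mult'; auto; apply is_lim_seq_const.
Qed.

Lemma Clim_const c : Clim (fun _ => c) c.
Proof. split; apply is_lim_seq_const. Qed.

Lemma Clim_unique u a b : Clim u a -> Clim u b -> a = b.
Proof.
  intros [H1 H2] [H3 H4]. apply Ceq2.
  - apply is_lim_seq_unique in H1, H3. rewrite H1 in H3. injection H3; auto.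
  - apply is_lim_seq_unique in H2, H4. rewrite H2 in H4. injection H4; auto.
Qed.

Lemma Clim_zero u e : (forall n, Cmod (u n) <= e n) -> is_lim_seq e 0 -> Clim u (RtoC 0).
Proof.
  intros H He; split; simpl; (eapply lim_by_bound; [|exact He]); intros n; rewrite Rminus_0_r;
  eapply Rle_trans; try apply H; first [apply re_le_Cmod| apply im_le_Cmod'].
Qed.

Lemma Clim_eql u a b : Clim u a -> a = b -> Clim u b.
Proof. intros; subst; auto. Qed.

Lemma term_bound w s n : Cmod w <= 1 -> (1 <= n)%nat ->
  Cmod (Cdiv (Cpow w n) (cpow_pos (INR n) s)) <= Rpower (INR n) (- Re s).
Proof.
  intros Hw Hn. rewrite Cmod_div by apply cp_nz. rewrite Cmod_pow, Cmod_cp, Rpower_Ropp.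
  unfold Rdiv. pose proof (Rpower_pos' (INR n) (Re s)).
  rewrite <- (Rmult_1_l (/ Rpower (INR n) (Re s))) at 2.
  apply Rmult_le_compat_r; [left; apply Rinv_0_lt_compat; auto|].
  rewrite <- (pow1 n). apply pow_incr. split; [apply Cmod_ge_0| auto].
Qed.

Lemma cterm_series s : ex_series (fun k => Cmod (cterm s k) * (/ 2) ^ k).
Proof.
  set (A := Cmod (Cminus (RtoC 1) s) + 1).
  apply (exR_le _ (wseq A (/ 2))).
  - intros k. rewrite Rabs_right.
    2: { apply Rle_ge, Rmult_le_pos; [apply Cmod_ge_0| apply pow_le; lra]. }
    rewrite cterm_binc, Cmod_opp. unfold wseq.
    pose proof (Cmod_binc (Cminus (RtoC 1) s) (S k)). fold A in H.
    pose proof (pow_le (/2) k ltac:(lra)).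
    assert (1 <= INR (S k)) by (apply (le_INR 1); lia).
    pose proof (Cmod_ge_0 (binc (Cminus (RtoC 1) s) (S k))).
    apply Rle_trans with (rbinc A (S k) * (/ 2) ^ k); [apply Rmult_le_compat_r; auto|].
    assert (0 <= rbinc A (S k) * (/ 2) ^ k) by (apply Rmult_le_pos; lra).
    replace (INR (S k) * rbinc A (S k) * (/ 2) ^ k) with (INR (S k) * (rbinc A (S k) * (/ 2) ^ k)) by ring.
    nra.
  - apply wseq_series. unfold A; pose proof (Cmod_ge_0 (Cminus (RtoC 1) s)); lra. lra.
Qed.

Lemma Rpower_split x sg k : 2 <= x ->
  Rpower x (- (sg + INR k)) <= (/ 2) ^ k * Rpower x (- sg).
Proof.
  intros Hx. replace (- (sg + INR k)) with (- sg + - INR k) by ring.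
  rewrite Rpower_plus, Rpower_Ropp with (y := INR k), Rpower_pow by lra.
  rewrite Rmult_comm. apply Rmult_le_compat_r; [left; apply Rpower_pos'|].
  rewrite pow_inv. apply Rinv_le_contravar; [apply pow_lt; lra|]. apply pow_incr; lra.
Qed.

Definition tailJ (z s : C) (m : nat) : C := nested_tail [(z, s)] m.

Lemma tailJ_eq z s m : tailJ z s m =
  CSeries (fun j => Cmult (Cdiv (Cpow z (m + j)) (cpow_pos (INR (m + j)) s)) (RtoC 1)).
Proof. reflexivity. Qed.

Lemma INR_ge2 n : (2 <= n)%nat -> 2 <= INR n.
Proof. intros; apply (le_INR 2); auto. Qed.

Definition Kin (s : C) := 4 * Series (fun k => Cmod (cterm s k) * (/ 2) ^ k) * KTE (Re s).

Lemma inner_identity z s m : Cmod z <= 1 -> z <> RtoC 0 -> 1 < Re s -> (2 <= m)%nat ->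
  exists S,
    CS (fun k => Cmult (cterm s k) (tailJ z (Cplus s (RtoC (INR k))) m)) S /\
    S = Cplus (Cmult (Cminus (RtoC 1) (Cinv z)) (tailJ z (Cminus s (RtoC 1)) m))
              (Cmult (Cinv z) (Cmult (Cpow z m) (cpow_pos (INR m) (Cminus (RtoC 1) s)))) /\
    Cmod S <= Kin s * Rpower (INR m) (1 - Re s).
Proof.
  intros Hz Hz0 Hs Hm.
  set (T := fun k j => Cdiv (Cpow z (m + j)%nat) (cpow_pos (INR (m + j)%nat) (Cplus s (RtoC (INR k))))).
  set (A := fun k j => Cmult (cterm s k) (Cmult (T k j) (RtoC 1))).
  set (al := fun k => Cmod (cterm s k) * (/ 2) ^ k).
  set (be := fun j => Rpower (INR (m + j)%nat) (- Re s)).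
  destruct (TE (Re s) m Hs ltac:(lia)) as [Ebe Sbe].
  assert (Eal : ex_series al) by apply cterm_series.
  assert (Hal : forall k, 0 <= al k) by (intros; apply Rmult_le_pos; [apply Cmod_ge_0| apply pow_le; lra]).
  assert (Hbe : forall j, 0 <= be j) by (intros; left; apply Rpower_pos').
  assert (HT : forall k j, Cmod (T k j) <= (/ 2) ^ k * be j).
  { intros k j. unfold T, be. eapply Rle_trans; [apply term_bound; auto; lia|].
    simpl Re. apply Rpower_split. apply INR_ge2. lia. }
  assert (HA : forall k j, Cmod (A k j) <= al k * be j).
  { intros k j. unfold A, al. rewrite !Cmod_mult, Cmod_1, Rmult_1_r.
    rewrite Rmult_assoc. apply Rmult_le_compat_l; [apply Cmod_ge_0| auto]. }
  assert (Rows : forall k, CS (A k) (Cmult (cterm s k) (tailJ z (Cplus s (RtoC (INR k))) m))).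
  { intros k. unfold A. apply CS_scal. rewrite tailJ_eq.
    apply (CS_dom _ (fun j => (/ 2) ^ k * be j)).
    - intros j. rewrite Cmod_mult, Cmod_1, Rmult_1_r. apply HT.
    - apply exR_scal_l; auto. }
  set (u := fun n => cpow_pos (INR n) (Cminus (RtoC 1) s)).
  set (g := fun j => Cmult (Cpow z (m + j)%nat) (u (m + j)%nat)).
  set (col := fun j => Cminus (g j) (Cmult (Cinv z) (g (S j)))).
  assert (Cols : forall j, CS (fun k => A k j) (col j)).
  { intros j. pose proof (binom_identity s (INR (m + j)%nat) (INR_ge2 (m + j)%nat ltac:(lia))) as H.
    apply (CS_scal (Cpow z (m + j)%nat)) in H.
    eapply CS_eql; [eapply CS_ext; [|exact H]|].
    - intros k. unfold A, T, Cdiv. ring.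
    - unfold col, g, u. replace (m + S j)%nat with (S (m + j)%nat) by lia. rewrite S_INR.
      change (Cpow z (S (m + j)%nat)) with (Cmult z (Cpow z (m + j)%nat)). field. auto. }
  destruct (fubini_C A al be _ _ Hal Hbe Eal Ebe HA Rows Cols) as [Sv [HSr HSc]].
  exists Sv. split; [exact HSr|].
  assert (Bcol : forall j, Cmod (col j) <= 2 * Series al * be j).
  { intros j. rewrite Rmult_assoc, <- Series_scal_r. apply (CS_bound _ _ _ (Cols j)); auto.
    apply exR_scal_r; auto. }
  assert (BS : Cmod Sv <= Kin s * Rpower (INR m) (1 - Re s)).
  { eapply Rle_trans; [apply (CS_bound _ _ _ HSc Bcol)|].
    - apply exR_scal_l; auto.
    - rewrite Series_scal_l. unfold Kin.
      assert (0 <= Series al).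
      { rewrite <- (is_series_unique _ _ isR_zero). apply Series_le; auto. intros; split; [lra| apply Hal]. }
      assert (E : Series be = Series (fun j => Rpower (INR (m + j)) (- Re s))) by reflexivity.
      rewrite E.
      assert (Series al * Series (fun j => Rpower (INR (m + j)) (- Re s)) <=
              Series al * (KTE (Re s) * Rpower (INR m) (1 - Re s))) by (apply Rmult_le_compat_l; auto).
      change (Series (fun k => Cmod (cterm s k) * (/ 2) ^ k)) with (Series al). lra. }
  split; [|exact BS].
  assert (Tel : forall M, csum col M =
     Cplus (Cmult (Cminus (RtoC 1) (Cinv z)) (csum g M))
           (Cminus (Cmult (Cinv z) (g O)) (Cmult (Cinv z) (g (S M))))).
  { induction M; simpl csum.
    - unfold col. ring.
    - rewrite IHM. unfold col. ring. }
  apply CS_Clim in HSc.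
  assert (Hg0 : Clim (fun M => Cmult (Cinv z) (g (S M))) (RtoC 0)).
  { apply (Clim_zero _ (fun M => / Cmod z * Rpower (INR (m + S M)%nat) (- (Re s - 1)))).
    - intros M. rewrite Cmod_mult, Cmod_inv by auto. apply Rmult_le_compat_l.
      + left; apply Rinv_0_lt_compat, Cmod_gt_0; auto.
      + unfold g, u. rewrite Cmod_mult, Cmod_pow, Cmod_cp.
        replace (Re (Cminus (RtoC 1) s)) with (- (Re s - 1)) by (unfold Re; simpl; ring).
        rewrite <- (Rmult_1_l (Rpower _ (- (Re s - 1)))) at 2.
        apply Rmult_le_compat_r; [left; apply Rpower_pos'|].
        rewrite <- (pow1 (m + S M)%nat). apply pow_incr. split; [apply Cmod_ge_0| auto].
    - replace 0 with (/ Cmod z * 0) by ring.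
      apply (is_lim_seq_scal_l _ (/ Cmod z) 0).
      apply (is_lim_seq_ext (fun n => Rpower (INR (n + S m)) (- (Re s - 1)))).
      + intros n. replace (n + S m)%nat with (m + S n)%nat by lia. reflexivity.
      + apply (is_lim_seq_incr_n (fun n => Rpower (INR n) (- (Re s - 1))) (S m)). apply Rpower_lim0; lra. }
  assert (HP : Clim (fun M => Cmult (Cminus (RtoC 1) (Cinv z)) (csum g M))
                    (Cminus Sv (Cmult (Cinv z) (g O)))).
  { pose proof (Clim_plus _ _ _ _ HSc (Clim_plus _ _ _ _ (Clim_const (Copp (Cmult (Cinv z) (g O)))) Hg0)) as H.
    eapply Clim_eql; [eapply Clim_ext; [|exact H]|].
    - intros M. cbv beta. rewrite Tel. ring.
    - ring. }
  assert (Eg0 : Cmult (Cinv z) (g O) = Cmult (Cinv z) (Cmult (Cpow z m) (cpow_pos (INR m) (Cminus (RtoC 1) s)))).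
  { unfold g, u. rewrite Nat.add_0_r. reflexivity. }
  destruct (Ceq_dec z (RtoC 1)) as [Z1|Z1].
  -
    assert (E0 : Cminus (RtoC 1) (Cinv z) = RtoC 0) by (rewrite Z1; apply Ceq2; simpl; field).
    rewrite E0 in HP |- *.
    assert (Clim (fun M => Cmult (RtoC 0) (csum g M)) (RtoC 0))
      by (eapply Clim_ext; [|apply Clim_const]; intros; simpl; ring).
    pose proof (Clim_unique _ _ _ HP H). rewrite <- Eg0.
    transitivity (Cplus (Cminus Sv (Cmult (Cinv z) (g O))) (Cmult (Cinv z) (g O))); [ring|].
    rewrite H0. ring.
  - assert (Hnz : Cminus (RtoC 1) (Cinv z) <> RtoC 0).
    { intro E. apply Z1. assert (Cinv z = RtoC 1).
      { transitivity (Cminus (RtoC 1) (Cminus (RtoC 1) (Cinv z))); [ring| rewrite E; ring]. }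
      transitivity (Cmult z (Cinv z)); [rewrite H; ring| apply Cinv_r; auto]. }
    apply (Clim_scal (Cinv (Cminus (RtoC 1) (Cinv z)))) in HP.
    assert (Hg : CS g (Cmult (Cinv (Cminus (RtoC 1) (Cinv z))) (Cminus Sv (Cmult (Cinv z) (g O))))).
    { apply CS_Clim. eapply Clim_ext; [|exact HP]. intros; cbv beta. rewrite Cmult_assoc, Cinv_l by auto. ring. }
    assert (EJ : tailJ z (Cminus s (RtoC 1)) m = Cmult (Cinv (Cminus (RtoC 1) (Cinv z))) (Cminus Sv (Cmult (Cinv z) (g O)))).
    { rewrite tailJ_eq. apply CS_CSeries. eapply CS_ext; [|exact Hg].
      intros j. unfold g, u. rewrite cp_div. 
      replace (Copp (Cminus s (RtoC 1))) with (Cminus (RtoC 1) s) by ring. ring. }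
    rewrite EJ, <- Eg0. field. split; auto. intro E; apply Z1; apply Ceq_minus; exact E.
Qed.


Fixpoint NT (l : list (C * C)) (f : nat -> C) (m : nat) : C :=
  match l with
  | [] => f m
  | (w, s) :: rest =>
      CSeries (fun j => Cmult (Cdiv (Cpow w (m + j)) (cpow_pos (INR (m + j)) s)) (NT rest f (m + j)))
  end.

Lemma CSeries_ext a b : (forall n, a n = b n) -> CSeries a = CSeries b.
Proof. intros E. unfold CSeries. f_equal; apply Series_ext; intros; rewrite E; auto. Qed.

Lemma NT_nested l m : nested_tail l m = NT l (fun _ => RtoC 1) m.
Proof.
  revert m; induction l as [|[w s] rest IH]; intros m; simpl; auto.
  apply CSeries_ext; intros j. rewrite IH. reflexivity.
Qed.

Lemma NT_app L1 L2 f m : NT (L1 ++ L2) f m = NT L1 (NT L2 f) m.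
Proof.
  revert m; induction L1 as [|[w s] rest IH]; intros m; simpl; auto.
  apply CSeries_ext; intros j. rewrite IH. reflexivity.
Qed.

Fixpoint dexp (l : list (C * C)) (b : R) : R :=
  match l with [] => b | (w, s) :: rest => dexp rest b + Re s - 1 end.

Fixpoint cond (l : list (C * C)) (b : R) : Prop :=
  match l with
  | [] => True
  | (w, s) :: rest => cond rest b /\ 1 < dexp rest b + Re s /\ Cmod w <= 1
  end.

Lemma NT_inter (N : nat) (HN : (1 <= N)%nat) L b : cond L b -> exists K, 0 <= K /\
  forall (d : nat -> C) (f : nat -> nat -> C) (g : nat -> C) (al : nat -> R),
  (forall k, 0 <= al k) -> ex_series al ->
  (forall k n, (N <= n)%nat -> Cmod (d k) * Cmod (f k n) <= al k * Rpower (INR n) (- b)) ->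
  (forall n, (N <= n)%nat -> CS (fun k => Cmult (d k) (f k n)) (g n)) ->
  forall m, (N <= m)%nat ->
    CS (fun k => Cmult (d k) (NT L (f k) m)) (NT L g m) /\
    (forall k, Cmod (d k) * Cmod (NT L (f k) m) <= al k * K * Rpower (INR m) (- dexp L b)).
Proof.
  induction L as [|[w s] rest IH]; intros Hc.
  - exists 1. split; [lra|]. intros d f g al Hal Eal Hb Hg m Hm. simpl. split; auto.
    intros k. rewrite Rmult_1_r. auto.
  - destruct Hc as [Hc [Hgam Hw]]. destruct (IH Hc) as [K' [HK' IHK]].
    set (gam := dexp rest b + Re s) in *.
    exists (2 * K' * KTE gam). split.
    { unfold KTE. apply Rmult_le_pos; [lra|]. apply Rmult_le_pos; [left; apply Rpower_pos'|].
      left; apply Rinv_0_lt_compat; lra. }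
    intros d f g al Hal Eal Hb Hg m Hm.
    specialize (IHK d f g al Hal Eal Hb Hg).
    set (t := fun j => Cdiv (Cpow w (m + j)) (cpow_pos (INR (m + j)) s)).
    set (be := fun j => K' * Rpower (INR (m + j)) (- gam)).
    destruct (TE gam m Hgam ltac:(lia)) as [Eg Sg].
    assert (Ebe : ex_series be) by (apply exR_scal_l; auto).
    assert (Hbe : forall j, 0 <= be j) by (intros; apply Rmult_le_pos; [auto| left; apply Rpower_pos']).
    set (A := fun k j => Cmult (d k) (Cmult (t j) (NT rest (f k) (m + j)))).
    assert (HA : forall k j, Cmod (A k j) <= al k * be j).
    { intros k j. unfold A. rewrite !Cmod_mult.
      destruct (IHK (m + j)%nat ltac:(lia)) as [_ Bk]. specialize (Bk k).
      assert (Ht : Cmod (t j) <= Rpower (INR (m + j)) (- Re s)) by (apply term_bound; auto; lia).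
      unfold be. replace (- gam) with (- Re s + - dexp rest b) by (unfold gam; ring).
      rewrite Rpower_plus.
      pose proof (Cmod_ge_0 (t j)). pose proof (Cmod_ge_0 (d k)). pose proof (Cmod_ge_0 (NT rest (f k) (m + j))).
      replace (Cmod (d k) * (Cmod (t j) * Cmod (NT rest (f k) (m + j)))) with
        (Cmod (t j) * (Cmod (d k) * Cmod (NT rest (f k) (m + j)))) by ring.
      replace (al k * (K' * (Rpower (INR (m + j)) (- Re s) * Rpower (INR (m + j)) (- dexp rest b)))) with
        (Rpower (INR (m + j)) (- Re s) * (al k * K' * Rpower (INR (m + j)) (- dexp rest b))) by ring.
      apply Rmult_le_compat; auto. apply Rmult_le_pos; auto. }
    assert (Rows : forall k, CS (A k) (Cmult (d k) (NT ((w, s) :: rest) (f k) m))).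
    { intros k. destruct (Ceq_dec (d k) (RtoC 0)) as [D0|D0].
      - eapply CS_eql; [apply CS_zero|]. intros j; unfold A; rewrite D0; ring. rewrite D0; ring.
      - apply CS_scal. simpl NT. fold t.
        apply (CS_dom _ (fun j => (al k / Cmod (d k)) * be j)).
        + intros j. pose proof (HA k j) as H. unfold A in H. rewrite Cmod_mult in H.
          apply Cmod_gt_0 in D0.
          apply (Rmult_le_reg_l (Cmod (d k))); auto.
          replace (Cmod (d k) * (al k / Cmod (d k) * be j)) with (al k * be j) by (field; lra). auto.
        + apply exR_scal_l; auto. }
    assert (Cols : forall j, CS (fun k => A k j) (Cmult (t j) (NT rest g (m + j)))).
    { intros j. destruct (IHK (m + j)%nat ltac:(lia)) as [Cj _].
      apply (CS_scal (t j)) in Cj. eapply CS_ext; [|exact Cj]. intros k; unfold A; ring. }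
    destruct (fubini_C A al be _ _ Hal Hbe Eal Ebe HA Rows Cols) as [Sv [HSr HSc]].
    split.
    + eapply CS_eql; [exact HSr|]. simpl NT. fold t. symmetry. apply CS_CSeries. exact HSc.
    + intros k. rewrite <- Cmod_mult.
      eapply Rle_trans; [apply (CS_bound _ _ _ (Rows k) (HA k)); apply exR_scal_l; auto|].
      rewrite Series_scal_l. unfold be. rewrite Series_scal_l.
      simpl dexp. fold gam. replace (- (gam - 1)) with (1 - gam) by ring.
      pose proof (Hal k).
      assert (al k * (K' * Series (fun j => Rpower (INR (m + j)) (- gam))) <=
              al k * (K' * (KTE gam * Rpower (INR m) (1 - gam)))).
      { apply Rmult_le_compat_l; auto. apply Rmult_le_compat_l; auto. }
      lra.
Qed.


Lemma NT_ext_ge L f f' m : (forall n, (m <= n)%nat -> f n = f' n) -> NT L f m = NT L f' m.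
Proof.
  revert m; induction L as [|[w s] rest IH]; intros m E; simpl.
  - apply E; lia.
  - apply CSeries_ext; intros j. rewrite (IH (m + j)%nat); auto. intros; apply E; lia.
Qed.

Lemma tailJ_bound_k z s k n : Cmod z <= 1 -> 1 < Re s -> (2 <= n)%nat ->
  Cmod (tailJ z (Cplus s (RtoC (INR k))) n) <= (/ 2) ^ k * (2 * KTE (Re s)) * Rpower (INR n) (1 - Re s).
Proof.
  intros Hz Hs Hn. destruct (TE (Re s) n Hs ltac:(lia)) as [E1 S1].
  set (b := fun j => (/ 2) ^ k * Rpower (INR (n + j)) (- Re s)).
  assert (Hb : forall j, Cmod (Cmult (Cdiv (Cpow z (n + j)) (cpow_pos (INR (n + j)) (Cplus s (RtoC (INR k))))) (RtoC 1)) <= b j).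
  { intros j. rewrite Cmod_mult, Cmod_1, Rmult_1_r. eapply Rle_trans; [apply term_bound; auto; lia|].
    simpl Re. apply Rpower_split. apply INR_ge2; lia. }
  assert (Eb : ex_series b) by (apply exR_scal_l; auto).
  pose proof (CS_dom _ _ Hb Eb) as H. rewrite tailJ_eq.
  eapply Rle_trans; [apply (CS_bound _ _ _ H Hb Eb)|].
  unfold b. rewrite Series_scal_l.
  pose proof (pow_le (/ 2) k ltac:(lra)).
  assert ((/ 2) ^ k * Series (fun j => Rpower (INR (n + j)) (- Re s)) <= (/ 2) ^ k * (KTE (Re s) * Rpower (INR n) (1 - Re s)))
    by (apply Rmult_le_compat_l; auto).
  lra.
Qed.

Lemma tailJ_bound z s n : Cmod z <= 1 -> 1 < Re s -> (1 <= n)%nat ->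
  CS (fun j => Cmult (Cdiv (Cpow z (n + j)) (cpow_pos (INR (n + j)) s)) (RtoC 1)) (tailJ z s n) /\
  Cmod (tailJ z s n) <= 2 * KTE (Re s) * Rpower (INR n) (1 - Re s).
Proof.
  intros Hz Hs Hn. destruct (TE (Re s) n Hs ltac:(lia)) as [E1 S1].
  set (b := fun j => Rpower (INR (n + j)) (- Re s)).
  assert (Hb : forall j, Cmod (Cmult (Cdiv (Cpow z (n + j)) (cpow_pos (INR (n + j)) s)) (RtoC 1)) <= b j).
  { intros j. rewrite Cmod_mult, Cmod_1, Rmult_1_r. apply term_bound; auto; lia. }
  pose proof (CS_dom _ _ Hb E1) as H. rewrite tailJ_eq. split; auto.
  eapply Rle_trans; [apply (CS_bound _ _ _ H Hb E1)|]. unfold b in *. lra.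
Qed.

Definition fin2 (x y : C) (k : nat) : C := match k with O => x | 1%nat => y | _ => RtoC 0 end.

Lemma CS_fin2 x y : CS (fin2 x y) (Cplus x y).
Proof.
  assert (H0 : CS (fun k => fin2 x y (S (S k))) (RtoC 0)) by (apply CS_zero; intros; reflexivity).
  apply (CS_unshift (fun k => fin2 x y (S k))) in H0. apply (CS_unshift (fin2 x y)) in H0. eapply CS_eql; [exact H0|]. simpl. ring.
Qed.

Definition rfin2 (x y : R) (k : nat) : R := match k with O => x | 1%nat => y | _ => 0 end.

Lemma ex_rfin2 x y : ex_series (rfin2 x y).
Proof.
  assert (H0 : is_series (fun k => rfin2 x y (S (S k))) 0) by (eapply is_series_ext; [|apply isR_zero]; intros; reflexivity).
  apply (isR_unshift (fun k => rfin2 x y (S k))) in H0. apply (isR_unshift (rfin2 x y)) in H0. eexists; exact H0.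
Qed.

Lemma rfin2_pos x y k : 0 <= x -> 0 <= y -> 0 <= rfin2 x y k.
Proof. intros; destruct k as [|[|]]; simpl; lra. Qed.

Definition Lg (z s : nat -> C) (a c : nat) : list (C * C) :=
  rev (combine (map z (seq a c)) (map s (seq a c))).

Lemma Lg_S z s a c : Lg z s a (S c) = Lg z s (S a) c ++ [(z a, s a)].
Proof. reflexivity. Qed.

Lemma dexp_app L1 L2 b : dexp (L1 ++ L2) b = dexp L1 (dexp L2 b).
Proof. induction L1 as [|[w s] rest IH]; simpl; auto. rewrite IH; auto. Qed.

Lemma cond_app L1 L2 b : cond L2 b -> cond L1 (dexp L2 b) -> cond (L1 ++ L2) b.
Proof.
  induction L1 as [|[w s] rest IH]; simpl; auto. intros H2 [H1 [H3 H4]].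
  rewrite dexp_app. auto.
Qed.

Lemma Re_plus x y : Re (Cplus x y) = Re x + Re y.
Proof. reflexivity. Qed.

Lemma cond_Lg z s c : forall a b,
  (forall i, (a <= i < a + c)%nat -> Cmod (z i) <= 1) ->
  (forall i, (a <= i < a + c)%nat -> 1 < b + Re (Csum_list (seq a (i - a + 1)) s) - INR (i - a)) ->
  cond (Lg z s a c) b.
Proof.
  induction c; intros a b Hz Hs.
  - simpl. auto.
  - rewrite Lg_S. apply cond_app.
    + simpl. split; auto. split; [|apply Hz; lia].
      specialize (Hs a ltac:(lia)). replace (a - a + 1)%nat with 1%nat in Hs by lia.
      replace (a - a)%nat with O in Hs by lia.
      replace (Csum_list (seq a 1) s) with (Cplus (s a) (RtoC 0)) in Hs by reflexivity.
      rewrite Re_plus in Hs. change (Re (RtoC 0)) with 0 in Hs. change (INR 0) with 0 in Hs. lra.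
    + simpl dexp. apply IHc.
      * intros; apply Hz; lia.
      * intros i Hi. specialize (Hs i ltac:(lia)).
        replace (i - a + 1)%nat with (S (i - S a + 1)) in Hs by lia.
        replace (i - a)%nat with (S (i - S a)) in Hs by lia.
        replace (Csum_list (seq a (S (i - S a + 1))) s) with (Cplus (s a) (Csum_list (seq (S a) (i - S a + 1)) s)) in Hs by reflexivity.
        rewrite Re_plus, S_INR in Hs. lra.
Qed.


Lemma part1 (N : nat) (z s : C) : (2 <= N)%nat -> Cmod z <= 1 -> z <> RtoC 0 -> 1 < Re s ->
     Cplus (Cmult (Cminus (RtoC 1) (Cinv z))
                  (LiStar_tail [z] [Cminus s (RtoC 1)] N))
           (Cdiv (Cpow z (N - 1)) (cpow_pos (INR N) (Cminus s (RtoC 1))))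
     = CSeries (fun k =>
         Cmult (Cmult (Cpow (RtoC (-1)) k)
                      (Cdiv (poch (Cminus s (RtoC 1)) (S k)) (RtoC (INR (fact (S k))))))
               (LiStar_tail [z] [Cplus s (RtoC (INR k))] N)).
Proof.
  intros HN Hz Hz0 Hs.
  destruct (inner_identity z s N Hz Hz0 Hs HN) as [Sv [HS [ES _]]].
  change (LiStar_tail [z] [Cminus s (RtoC 1)] N) with (tailJ z (Cminus s (RtoC 1)) N).
  rewrite (CSeries_ext _ (fun k => Cmult (cterm s k) (tailJ z (Cplus s (RtoC (INR k))) N))) by reflexivity.
  rewrite (CS_CSeries _ _ HS), ES.
  destruct N as [|N']; [lia|]. replace (S N' - 1)%nat with N' by lia.
  rewrite cp_div. replace (Copp (Cminus s (RtoC 1))) with (Cminus (RtoC 1) s) by ring.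
  rewrite Cpow_S. field. exact Hz0.
Qed.

Lemma LiA (z s : nat -> C) r'' x N :
  LiStar_tail (map z (seq 1 (S (S r'')))) (x :: map s (seq 2 (S (S r'') - 1))) N =
  NT (Lg z s 2 (S r'')) (tailJ (z 1%nat) x) N.
Proof.
  unfold LiStar_tail. replace (S (S r'') - 1)%nat with (S r'') by lia.
  change (nested_tail (Lg z s 2 (S r'') ++ [(z 1%nat, x)]) N = NT (Lg z s 2 (S r'')) (tailJ (z 1%nat) x) N).
  rewrite NT_nested, NT_app. apply NT_ext_ge. intros n _. unfold tailJ. rewrite NT_nested. reflexivity.
Qed.

Lemma LiB (z s : nat -> C) r'' w y N :
  LiStar_tail (w :: map z (seq 3 (S (S r'') - 2))) (y :: map s (seq 3 (S (S r'') - 2))) N =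
  NT (Lg z s 3 r'') (tailJ w y) N.
Proof.
  unfold LiStar_tail. replace (S (S r'') - 2)%nat with r'' by lia.
  change (nested_tail (Lg z s 3 r'' ++ [(w, y)]) N = NT (Lg z s 3 r'') (tailJ w y) N).
  rewrite NT_nested, NT_app. apply NT_ext_ge. intros n _. unfold tailJ. rewrite NT_nested. reflexivity.
Qed.

Lemma Csum_seq_S a c s : Csum_list (seq a (S c)) s = Cplus (s a) (Csum_list (seq (S a) c) s).
Proof. reflexivity. Qed.

Lemma Re_sum_bound (r : nat) (s : nat -> C) i : in_U r s -> (1 <= i <= r)%nat ->
  INR i < Re (Csum_list (seq 1 i) s).
Proof. intros HU Hi. apply HU; auto. Qed.

Lemma part2 (N r'' : nat) (z s : nat -> C) :
  (2 <= N)%nat ->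
  (forall i : nat, (1 <= i <= S (S r''))%nat -> Cmod (z i) <= 1) ->
  z 1%nat <> RtoC 0 ->
  in_U (S (S r'')) s ->
     Cplus (Cmult (Cminus (RtoC 1) (Cinv (z 1%nat)))
                  (LiStar_tail (map z (seq 1 (S (S r''))))
                               (Cminus (s 1%nat) (RtoC 1) :: map s (seq 2 (S (S r'') - 1))) N))
           (Cmult (Cinv (z 1%nat))
                  (LiStar_tail (Cmult (z 1%nat) (z 2%nat) :: map z (seq 3 (S (S r'') - 2)))
                               (Cminus (Cplus (s 1%nat) (s 2%nat)) (RtoC 1) :: map s (seq 3 (S (S r'') - 2)))
                               N))
     = CSeries (fun k =>
         Cmult (Cmult (Cpow (RtoC (-1)) k)
                      (Cdiv (poch (Cminus (s 1%nat) (RtoC 1)) (S k)) (RtoC (INR (fact (S k))))))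
               (LiStar_tail (map z (seq 1 (S (S r''))))
                            (Cplus (s 1%nat) (RtoC (INR k)) :: map s (seq 2 (S (S r'') - 1))) N)).
Proof.
  intros HN Hz Hz0 HU.
  rewrite !LiA, LiB.
  set (z1 := z 1%nat). set (z2 := z 2%nat). set (s1 := s 1%nat). set (s2 := s 2%nat).
  assert (Hs1 : 1 < Re s1).
  { pose proof (Re_sum_bound _ _ 1 HU ltac:(lia)) as H. rewrite Csum_seq_S in H.
    rewrite Re_plus in H. change (Re (Csum_list (seq 2 0) s)) with 0 in H. change (INR 1) with 1 in H.
    fold s1 in H. lra. }
  assert (Hs12 : 2 < Re s1 + Re s2).
  { pose proof (Re_sum_bound _ _ 2 HU ltac:(lia)) as H. rewrite !Csum_seq_S in H.
    rewrite !Re_plus in H. change (Re (Csum_list (seq 3 0) s)) with 0 in H. change (INR 2) with 2 in H.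
    fold s1 s2 in H. lra. }
  assert (Hz1 : Cmod z1 <= 1) by (apply Hz; lia).
  assert (Hz2 : Cmod z2 <= 1) by (apply Hz; lia).
  assert (HzN : 0 < Cmod z1) by (apply Cmod_gt_0; auto).
  set (L := Lg z s 2 (S r'')).
  set (L3 := Lg z s 3 r'').
  assert (HL : L = L3 ++ [(z2, s2)]) by reflexivity.
  assert (C1 : cond L (Re s1 - 1)).
  { apply cond_Lg.
    - intros; apply Hz; lia.
    - intros i Hi. pose proof (Re_sum_bound _ _ i HU ltac:(lia)) as H.
      replace i with (S (S (i - 2))) in H at 2 by lia.
      rewrite Csum_seq_S, Re_plus in H.
      replace (i - 2 + 1)%nat with (S (i - 2)) by lia.
      replace (INR i) with (INR (i - 2) + 2) in H.
      2: { rewrite minus_INR by lia. replace (INR 2) with 2 by (simpl; ring). ring. }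
      fold s1 in H. lra. }
  assert (C2 : cond L3 (Re s1 + Re s2 - 2)).
  { apply cond_Lg.
    - intros; apply Hz; lia.
    - intros i Hi. pose proof (Re_sum_bound _ _ i HU ltac:(lia)) as H.
      replace i with (S (S (S (i - 3)))) in H at 2 by lia.
      rewrite !Csum_seq_S, !Re_plus in H.
      replace (i - 3 + 1)%nat with (S (i - 3)) by lia.
      replace (INR i) with (INR (i - 3) + 3) in H.
      2: { rewrite minus_INR by lia. replace (INR 3) with 3 by (simpl; ring). ring. }
      rewrite Csum_seq_S, Re_plus. fold s1 s2 in H. lra. }
  assert (HN1 : (1 <= N)%nat) by lia.
  set (J := tailJ z1 (Cminus s1 (RtoC 1))).
  set (Kf := fun n : nat => Cmult (Cinv z1) (Cmult (Cpow z1 n) (cpow_pos (INR n) (Cminus (RtoC 1) s1)))).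
  set (G := fun n : nat => Cplus (Cmult (Cminus (RtoC 1) (Cinv z1)) (J n)) (Kf n)).
  assert (Inner : forall n, (N <= n)%nat -> exists Sv,
    CS (fun k => Cmult (cterm s1 k) (tailJ z1 (Cplus s1 (RtoC (INR k))) n)) Sv /\ Sv = G n /\
    Cmod Sv <= Kin s1 * Rpower (INR n) (1 - Re s1)).
  { intros n Hn. apply inner_identity; auto. lia. }
  assert (BKf : forall n, Cmod (Kf n) <= / Cmod z1 * Rpower (INR n) (1 - Re s1)).
  { intros n. unfold Kf. rewrite !Cmod_mult, Cmod_inv, Cmod_pow, Cmod_cp by auto.
    replace (Re (Cminus (RtoC 1) s1)) with (1 - Re s1) by (unfold Re; simpl; ring).
    pose proof (Rpower_pos' (INR n) (1 - Re s1)). pose proof (Rinv_0_lt_compat _ HzN).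
    assert (Cmod z1 ^ n <= 1) by (rewrite <- (pow1 n); apply pow_incr; split; [apply Cmod_ge_0| auto]).
    pose proof (pow_le (Cmod z1) n (Cmod_ge_0 z1)).
    apply Rmult_le_compat_l; [lra|].
    rewrite <- (Rmult_1_l (Rpower (INR n) (1 - Re s1))) at 2. apply Rmult_le_compat_r; lra. }
  destruct (NT_inter N HN1 L (Re s1 - 1) C1) as [K1 [HK1 Hint1]].
  assert (RHS : CS (fun k => Cmult (cterm s1 k) (NT L (tailJ z1 (Cplus s1 (RtoC (INR k)))) N)) (NT L G N)).
  { refine (proj1 (Hint1 (cterm s1) (fun k => tailJ z1 (Cplus s1 (RtoC (INR k)))) G
        (fun k => Cmod (cterm s1 k) * (/ 2) ^ k * (2 * KTE (Re s1))) _ _ _ _ N (le_n N))).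
    - intros k. apply Rmult_le_pos; [apply Rmult_le_pos; [apply Cmod_ge_0| apply pow_le; lra]|].
      unfold KTE. apply Rmult_le_pos; [lra|]. apply Rmult_le_pos; [left; apply Rpower_pos'|].
      left; apply Rinv_0_lt_compat; lra.
    - apply exR_scal_r, cterm_series.
    - intros k n Hn. replace (- (Re s1 - 1)) with (1 - Re s1) by ring.
      pose proof (tailJ_bound_k z1 s1 k n Hz1 Hs1 ltac:(lia)).
      rewrite Rmult_assoc, Rmult_assoc. apply Rmult_le_compat_l; [apply Cmod_ge_0|].
      rewrite <- Rmult_assoc. exact H.
    - intros n Hn. destruct (Inner n Hn) as [Sv [H1 [H2 _]]]. rewrite <- H2. exact H1. }
  destruct (Hint1 (fin2 (Cminus (RtoC 1) (Cinv z1)) (RtoC 1))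
                  (fun k => match k with O => J | _ => Kf end) G
                  (rfin2 (Kin s1 + / Cmod z1) (/ Cmod z1))) with (m := N) as [Lin _]; auto.
  - intros k. apply rfin2_pos.
    + unfold Kin. apply Rplus_le_le_0_compat; [|left; apply Rinv_0_lt_compat; auto].
      apply Rmult_le_pos; [apply Rmult_le_pos; [lra|]|].
      * rewrite <- (is_series_unique _ _ isR_zero). apply Series_le; [|apply cterm_series].
        intros; split; [lra| apply Rmult_le_pos; [apply Cmod_ge_0| apply pow_le; lra]].
      * unfold KTE. apply Rmult_le_pos; [left; apply Rpower_pos'|]. left; apply Rinv_0_lt_compat; lra.
    + left; apply Rinv_0_lt_compat; auto.
  - apply ex_rfin2.
  - intros k n Hn. replace (- (Re s1 - 1)) with (1 - Re s1) by ring.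
    destruct k as [|[|k]]; simpl fin2; simpl rfin2.
    + rewrite <- Cmod_mult. destruct (Inner n Hn) as [Sv [_ [H2 H3]]].
      replace (Cmult (Cminus (RtoC 1) (Cinv z1)) (J n)) with (Cminus Sv (Kf n)) by (rewrite H2; unfold G; ring).
      eapply Rle_trans; [apply Cmod_triangle|]. rewrite Cmod_opp. specialize (BKf n). lra.
    + rewrite Cmod_1, Rmult_1_l. apply BKf.
    + rewrite Cmod_0, !Rmult_0_l. lra.
  - intros n Hn. eapply CS_ext; [|apply CS_fin2]. 
    + intros [|[|k]]; simpl; ring.
  - assert (Lin2 : CS (fun k => Cmult (fin2 (Cminus (RtoC 1) (Cinv z1)) (RtoC 1) k)
                      (NT L (match k with O => J | _ => Kf end) N))
                 (Cplus (Cmult (Cminus (RtoC 1) (Cinv z1)) (NT L J N)) (NT L Kf N))).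
    { eapply CS_ext; [|apply CS_fin2]. intros [|[|k]]; simpl; ring. }
    pose proof (CS_unique _ _ _ Lin Lin2) as EG.
    set (H := tailJ (Cmult z1 z2) (Cminus (Cplus s1 s2) (RtoC 1))).
    assert (Hs12' : 1 < Re (Cminus (Cplus s1 s2) (RtoC 1))) by (unfold Re in *; simpl; lra).
    assert (EKf : NT L Kf N = NT L3 (fun n => Cmult (Cinv z1) (H n)) N).
    { rewrite HL, NT_app. apply NT_ext_ge. intros n Hn. simpl NT.
      destruct (tailJ_bound (Cmult z1 z2) (Cminus (Cplus s1 s2) (RtoC 1)) n) as [Hc _]; auto.
      { rewrite Cmod_mult. pose proof (Cmod_ge_0 z1). pose proof (Cmod_ge_0 z2). nra. }
      { lia. }
      apply (CS_scal (Cinv z1)) in Hc. apply CS_CSeries. eapply CS_ext; [|exact Hc].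
      intros j. unfold Kf. rewrite !cp_div, Cpow_mult_l.
      replace (cpow_pos (INR (n + j)) (Copp (Cminus (Cplus s1 s2) (RtoC 1)))) with
        (Cmult (cpow_pos (INR (n + j)) (Cminus (RtoC 1) s1)) (cpow_pos (INR (n + j)) (Copp s2)))
        by (rewrite <- cp_add; f_equal; ring).
      ring. }
    destruct (NT_inter N HN1 L3 (Re s1 + Re s2 - 2) C2) as [K2 [HK2 Hint2]].
    destruct (Hint2 (fin2 (Cinv z1) (RtoC 0)) (fun _ => H) (fun n => Cmult (Cinv z1) (H n))
                  (rfin2 (/ Cmod z1 * (2 * KTE (Re (Cminus (Cplus s1 s2) (RtoC 1))))) 0)) with (m := N) as [Sc _]; auto.
    + intros k. apply rfin2_pos; [|lra]. apply Rmult_le_pos; [left; apply Rinv_0_lt_compat; auto|].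
      unfold KTE. apply Rmult_le_pos; [lra|]. apply Rmult_le_pos; [left; apply Rpower_pos'|].
      left; apply Rinv_0_lt_compat; lra.
    + apply ex_rfin2.
    + intros k n Hn. destruct k as [|k]; simpl fin2; simpl rfin2.
      * rewrite Cmod_inv by auto. rewrite Rmult_assoc. apply Rmult_le_compat_l; [left; apply Rinv_0_lt_compat; auto|].
        destruct (tailJ_bound (Cmult z1 z2) (Cminus (Cplus s1 s2) (RtoC 1)) n) as [_ Hb]; auto.
        { rewrite Cmod_mult. pose proof (Cmod_ge_0 z1). pose proof (Cmod_ge_0 z2). nra. }
        { lia. }
        replace (- (Re s1 + Re s2 - 2)) with (1 - Re (Cminus (Cplus s1 s2) (RtoC 1))) by (unfold Re; simpl; ring).
        exact Hb.
      * destruct k; simpl; rewrite Cmod_0, !Rmult_0_l; lra.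
    + intros n Hn. eapply CS_eql; [eapply CS_ext; [|apply (CS_fin2 (Cmult (Cinv z1) (H n)) (RtoC 0))]|].
      * intros [|[|k]]; simpl; ring.
      * ring.
    + assert (Sc2 : CS (fun k => Cmult (fin2 (Cinv z1) (RtoC 0) k) (NT L3 H N)) (Cmult (Cinv z1) (NT L3 H N))).
      { eapply CS_eql; [eapply CS_ext; [|apply (CS_fin2 (Cmult (Cinv z1) (NT L3 H N)) (Cmult (RtoC 0) (NT L3 H N)))]|].
        - intros [|[|k]]; simpl; ring.
        - ring. }
      pose proof (CS_unique _ _ _ Sc Sc2) as ES.
      symmetry. rewrite (CSeries_ext _ (fun k => Cmult (cterm s1 k) (NT L (tailJ z1 (Cplus s1 (RtoC (INR k)))) N)))
        by (intros k; unfold cterm; rewrite LiA; reflexivity).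
      rewrite (CS_CSeries _ _ RHS), EG, EKf, ES. reflexivity.
Qed.

Theorem proposition1 (N r : nat) (z s : nat -> C) :
  (2 <= N)%nat -> (1 <= r)%nat ->
  (forall i : nat, (1 <= i <= r)%nat -> Cmod (z i) <= 1) ->
  z 1%nat <> RtoC 0 ->
  in_U r s ->
  (r = 1%nat ->
     Cplus (Cmult (Cminus (RtoC 1) (Cinv (z 1%nat)))
                  (LiStar_tail [z 1%nat] [Cminus (s 1%nat) (RtoC 1)] N))
           (Cdiv (Cpow (z 1%nat) (N - 1)) (cpow_pos (INR N) (Cminus (s 1%nat) (RtoC 1))))
     = CSeries (fun k =>
         Cmult (Cmult (Cpow (RtoC (-1)) k)
                      (Cdiv (poch (Cminus (s 1%nat) (RtoC 1)) (S k)) (RtoC (INR (fact (S k))))))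
               (LiStar_tail [z 1%nat] [Cplus (s 1%nat) (RtoC (INR k))] N))) /\
  ((1 < r)%nat ->
     Cplus (Cmult (Cminus (RtoC 1) (Cinv (z 1%nat)))
                  (LiStar_tail (map z (seq 1 r))
                               (Cminus (s 1%nat) (RtoC 1) :: map s (seq 2 (r - 1))) N))
           (Cmult (Cinv (z 1%nat))
                  (LiStar_tail (Cmult (z 1%nat) (z 2%nat) :: map z (seq 3 (r - 2)))
                               (Cminus (Cplus (s 1%nat) (s 2%nat)) (RtoC 1) :: map s (seq 3 (r - 2)))
                               N))
     = CSeries (fun k =>
         Cmult (Cmult (Cpow (RtoC (-1)) k)
                      (Cdiv (poch (Cminus (s 1%nat) (RtoC 1)) (S k)) (RtoC (INR (fact (S k))))))
               (LiStar_tail (map z (seq 1 r))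
                            (Cplus (s 1%nat) (RtoC (INR k)) :: map s (seq 2 (r - 1))) N))).
Proof.
  intros HN Hr Hz Hz1 HU.
  assert (Hs1 : 1 < Re (s 1%nat)).
  { pose proof (Re_sum_bound _ _ 1 HU ltac:(lia)) as H. rewrite Csum_seq_S in H.
    rewrite Re_plus in H. change (Re (Csum_list (seq 2 0) s)) with 0 in H. change (INR 1) with 1 in H. lra. }
  split.
  - intros Hr1. subst r. apply part1; [auto| apply Hz; lia | auto | auto].
  - intros Hr2. destruct r as [|[|r'']]; try lia. apply part2; auto.
Qed.
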